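(* Let $D'$ be a Falk subcomplex of type $s_3$ in the Artin complex $D(B_3)$. Then the orthoscheme metric on $D'$ is $\mathrm{CAT}(0)$.
   Context: $A(B_3)=\langle s_1,s_2,s_3 \mid s_1s_2s_1=s_2s_1s_2,\ s_1s_3=s_3s_1,\ s_2s_3s_2s_3=s_3s_2s_3s_2\rangle$ and $W(B_3)$ is its quotient by $s_i^2=1$. For $i=1,2,3$, $\hat s_i$ denotes the standard parabolic subgroup generated by the other two generators (in $A(B_3)$ or $W(B_3)$). The Artin complex $D(B_3)$ (resp. Coxeter complex $C(B_3)$) has vertices the cosets $g\hat s_i$ in $A(B_3)$ (resp. $W(B_3)$), of type $\hat s_i$, and a set of vertices spans a simplex iff the cosets have nonempty common intersection; $C(B_3)$ is a triangulation of the 2-sphere on which $W(B_3)$ acts by reflections. Let $\rho:D(B_3)\to C(B_3)$ be the simplicial map induced by the quotient $A(B_3)\to W(B_3)$. A Falk subcomplex of type $s_3$: take a reflection $r\in W(B_3)$ conjugate to $s_3$, let $H$ be the subcomplex of $C(B_3)$ fixed pointwise by $r$, choose one of the two components of $C(B_3)\setminus H$, let $U$ be the largest closed subcomplex of $C(B_3)$ contained in that component, and take a lift of $U$ along $\rho$ (a subcomplex of $D(B_3)$ mapped isomorphically onto $U$ by $\rho$). The orthoscheme metric on $D'$ is the piecewise Euclidean length metric in which each 2-simplex is a Euclidean isosceles right triangle with the right angle at its vertex of type $\hat s_2$ (angles $\pi/4$ at the vertices of types $\hat s_1$ and $\hat s_3$). *)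

(* Defs.v *)
From Stdlib Require Import Reals List Relations Bool.
From Coquelicot Require Import Rbar Lub.
Import ListNotations.
Open Scope R_scope.

Inductive gen := s1 | s2 | s3.
(* a letter (a, false) is the generator a, (a, true) is its inverse *)
Definition letter := (gen * bool)%type.
Definition word := list letter.
Definition lt (a : gen) : letter := (a, false).
Definition winv (g : word) : word := rev (map (fun l => (fst l, negb (snd l))) g).

Inductive geq (rels : list (word * word)) : word -> word -> Prop :=
| geq_refl w : geq rels w w
| geq_sym u v : geq rels u v -> geq rels v u
| geq_trans u v w : geq rels u v -> geq rels v w -> geq rels u w
| geq_free u v a b : geq rels (u ++ (a, b) :: (a, negb b) :: v) (u ++ v)
| geq_rel u v l r : In (l, r) rels -> geq rels (u ++ l ++ v) (u ++ r ++ v).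

Definition relsA : list (word * word) :=
  [ ([lt s1; lt s2; lt s1], [lt s2; lt s1; lt s2]);
    ([lt s1; lt s3], [lt s3; lt s1]);
    ([lt s2; lt s3; lt s2; lt s3], [lt s3; lt s2; lt s3; lt s2]) ].
Definition relsW : list (word * word) :=
  relsA ++ [ ([lt s1; lt s1], []); ([lt s2; lt s2], []); ([lt s3; lt s3], []) ].

Definition eqA := geq relsA.
Definition eqW := geq relsW.

(* the coset g \hat s_i (as a set of words, closed under the group equality) *)
Definition coset (rels : list (word * word)) (i : gen) (g : word) : word -> Prop :=
  fun w => exists h, (forall l, In l h -> fst l <> i) /\ geq rels w (g ++ h).

(* a vertex: its type i (meaning type \hat s_i) and the coset itself *)
Definition vertex := (gen * (word -> Prop))%type.

Definition isVertex rels (v : vertex) : Prop := exists g, snd v = coset rels (fst v) g.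

Definition simplex rels (s : list vertex) : Prop :=
  s <> [] /\ (forall v, In v s -> isVertex rels v) /\
  exists w, forall v, In v s -> snd v w.

Definition simplexA := simplex relsA.
Definition simplexW := simplex relsW.

Definition rhoV (v : vertex) : vertex :=
  (fst v, fun w => exists u, snd v u /\ eqW w u).

Definition reflS3 (r : word) : Prop := exists g, eqW r (g ++ [lt s3] ++ winv g).

Definition actV (r : word) (v : vertex) : vertex :=
  (fst v, fun w => exists u, snd v u /\ eqW w (r ++ u)).

Definition fixedV (r : word) (v : vertex) : Prop := actV r v = v.

Definition adjNF (r : word) (u v : vertex) : Prop :=
  isVertex relsW u /\ isVertex relsW v /\ ~ fixedV r u /\ ~ fixedV r v /\
  simplexW [u; v].

(* U: the largest closed subcomplex of C(B_3) contained in the component of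
   C(B_3) \ H containing the (non-fixed) vertex v0 *)
Definition Ucomp (r : word) (v0 : vertex) (s : list vertex) : Prop :=
  simplexW s /\
  forall v, In v s -> ~ fixedV r v /\ clos_refl_trans vertex (adjNF r) v0 v.

Definition isLift (K : list vertex -> Prop) (U : list vertex -> Prop) : Prop :=
  (forall s, K s -> simplexA s) /\
  (forall s s', K s -> s' <> [] -> incl s' s -> K s') /\
  (forall s, K s -> U (map rhoV s)) /\
  (forall t, U t -> exists s, K s /\ forall w, In w t <-> In w (map rhoV s)) /\
  (forall v v' s s', K s -> K s' -> In v s -> In v' s' -> rhoV v = rhoV v' -> v = v').

Definition pt := vertex -> R.

(* position of the vertex of type \hat s_i in the model isosceles right
   triangle, right angle at the vertex of type \hat s_2 *)
Definition pos (v : vertex) : R * R :=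
  match fst v with s1 => (0, 0) | s2 => (1, 0) | s3 => (1, 1) end.

Definition eucl (p q : R * R) : R :=
  sqrt ((fst p - fst q) ^ 2 + (snd p - snd q) ^ 2).

Fixpoint sumL (s : list vertex) (f : vertex -> R) : R :=
  match s with [] => 0 | v :: s' => f v + sumL s' f end.

Definition image (s : list vertex) (x : pt) : R * R :=
  (sumL s (fun v => x v * fst (pos v)), sumL s (fun v => x v * snd (pos v))).

(* points of the geometric realization |K| (barycentric coordinates) *)
Definition inSimplex (s : list vertex) (x : pt) : Prop :=
  (forall v, x v <> 0 -> In v s) /\ (forall v, 0 <= x v) /\ sumL s x = 1.

Definition isPt (K : list vertex -> Prop) (x : pt) : Prop :=
  exists s, K s /\ NoDup s /\ inSimplex s x.

Definition pieceLen (K : list vertex -> Prop) (x y : pt) (d : R) : Prop :=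
  exists s, K s /\ NoDup s /\ inSimplex s x /\ inSimplex s y /\
    d = eucl (image s x) (image s y).

Fixpoint strLen (K : list vertex -> Prop) (x : pt) (ps : list pt) (y : pt) (d : R)
  : Prop :=
  match ps with
  | [] => pieceLen K x y d
  | p :: ps' => exists d1 d2, pieceLen K x p d1 /\ strLen K p ps' y d2 /\ d = d1 + d2
  end.

Definition dist (K : list vertex -> Prop) (x y : pt) : Rbar :=
  Glb_Rbar (fun d => exists ps, Forall (isPt K) ps /\ strLen K x ps y d).

Definition geodesic (K : list vertex -> Prop) (g : R -> pt) (x y : pt) (l : R) : Prop :=
  0 <= l /\ g 0 = x /\ g l = y /\
  forall s t, 0 <= s <= l -> 0 <= t <= l ->
    isPt K (g s) /\ dist K (g s) (g t) = Finite (Rabs (s - t)).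

Definition cmp (a b : R * R) (l s : R) : R * R :=
  (fst a + (s / l) * (fst b - fst a), snd a + (s / l) * (snd b - snd a)).

Definition CAT0 (K : list vertex -> Prop) : Prop :=
  (forall x y, isPt K x -> isPt K y -> exists g l, geodesic K g x y l) /\
  forall (x y z : pt) (g1 g2 g3 : R -> pt) (l1 l2 l3 : R) (xb yb zb : R * R),
    geodesic K g1 x y l1 -> geodesic K g2 y z l2 -> geodesic K g3 z x l3 ->
    eucl xb yb = l1 -> eucl yb zb = l2 -> eucl zb xb = l3 ->
    let sides := [(g1, l1, xb, yb); (g2, l2, yb, zb); (g3, l3, zb, xb)] in
    forall e1 e2 s t, In e1 sides -> In e2 sides ->
      match e1, e2 with (h1, m1, a1, b1), (h2, m2, a2, b2) =>
        0 <= s <= m1 -> 0 <= t <= m2 ->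
        Rbar_le (dist K (h1 s) (h2 t)) (Finite (eucl (cmp a1 b1 m1 s) (cmp a2 b2 m2 t)))
      end.

(* Main.v *)
Require Import Defs.
From Stdlib Require Import Reals List ZArith Lia Lra Bool Relations Permutation.
From Stdlib Require Import FunctionalExtensionality PropExtensionality IndefiniteDescription Classical ClassicalEpsilon.
From Coquelicot Require Import Rbar Lub.
Import ListNotations.


Lemma geq_ctx rels : forall u v, geq rels u v -> forall x y, geq rels (x ++ u ++ y) (x ++ v ++ y).
Proof.
  induction 1; intros x y.
  - apply geq_refl.
  - apply geq_sym; auto.
  - eapply geq_trans; eauto.
  - rewrite <- !app_assoc; simpl. rewrite !(app_assoc x u). apply geq_free.
  - rewrite <- !app_assoc. rewrite !(app_assoc x u). apply geq_rel; auto.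
Qed.

Lemma geq_cons rels l u v : geq rels u v -> geq rels (l :: u) (l :: v).
Proof. intro H. pose proof (geq_ctx rels u v H [l] []). rewrite !app_nil_r in H0. exact H0. Qed.

Lemma geq_appl rels x u v : geq rels u v -> geq rels (x ++ u) (x ++ v).
Proof. intro H. pose proof (geq_ctx rels u v H x []). rewrite !app_nil_r in H0. exact H0. Qed.

Definition Z3 := (Z*Z*Z)%type.
Section GT. Variable A : Type. Variable ng : A -> A.
Definition genT (a:gen) (v:A*A*A) : A*A*A :=
  let '(x,y,z) := v in match a with s1 => (y,x,z) | s2 => (x,z,y) | s3 => (x,y,ng z) end.
Fixpoint actT (w:word) v := match w with [] => v | l :: w' => genT (fst l) (actT w' v) end.
End GT.
Definition act := actT Z Z.opp.
Definition SI := (nat*bool)%type.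
Definition negS (x:SI) : SI := (fst x, negb (snd x)).
Definition sym0 : SI*SI*SI := ((0,false),(1,false),(2,false))%nat.
Definition elt (w:word) := actT SI negS w sym0.
Definition interp (v:Z3) (x:SI) : Z :=
  let '(a,b,c) := v in let c0 := match fst x with 0%nat => a | 1%nat => b | _ => c end in
  if snd x then (- c0)%Z else c0.
Definition map3 {A B} (f:A->B) (v:A*A*A) := let '(x,y,z) := v in (f x, f y, f z).

Lemma actT_map {A B} (nA:A->A) (nB:B->B) (f:A->B) (Hf: forall x, f (nA x) = nB (f x)) w v :
  actT B nB w (map3 f v) = map3 f (actT A nA w v).
Proof. induction w; simpl; auto. rewrite IHw. destruct (actT A nA w v) as [[x y] z].
  destruct (fst a); simpl; rewrite ?Hf; auto. Qed.

Lemma interp_neg v x : interp v (negS x) = (- interp v x)%Z.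
Proof. destruct v as [[a b] c], x as [i []]; simpl; destruct i as [|[|]]; lia. Qed.

Lemma act_elt w v : act w v = map3 (interp v) (elt w).
Proof. unfold act, elt. replace v with (map3 (interp v) sym0) at 1.
  apply actT_map. apply interp_neg. destruct v as [[a b] c]; reflexivity. Qed.

Lemma act_app u v x : act (u ++ v) x = act u (act v x).
Proof. induction u; simpl; auto. unfold act in *; simpl. rewrite IHu. auto. Qed.

Lemma genZ_inv a v : genT Z Z.opp a (genT Z Z.opp a v) = v.
Proof. destruct v as [[x y] z]; destruct a; simpl; f_equal; lia. Qed.

Lemma eqW_act : forall u v, eqW u v -> forall x, act u x = act v x.
Proof.
  induction 1 as [w|u v H IH|u v w H1 IH1 H2 IH2|u v a b|u v l r H]; intros x.
  - reflexivity.
  - rewrite IH; reflexivity.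
  - rewrite IH1; auto.
  - rewrite !act_app. simpl. unfold act at 1 3. f_equal. simpl. apply genZ_inv.
  - rewrite !act_app. f_equal. rewrite !act_elt. f_equal.
    unfold relsW, relsA in H; simpl in H.
    repeat destruct H as [H|H]; try (inversion H; subst; reflexivity).
Qed.

Lemma winv_cons l u : winv (l :: u) = winv u ++ [(fst l, negb (snd l))].
Proof. reflexivity. Qed.

Lemma eqW_winv u w : eqW (u ++ winv u ++ w) w.
Proof.
  revert w; induction u as [|l u IH]; intro w; simpl. apply geq_refl.
  rewrite winv_cons. rewrite <- app_assoc. simpl.
  eapply geq_trans. apply geq_cons. apply IH.
  destruct l as [a b]. simpl. apply (geq_free relsW [] w a b).
Qed.

Lemma act_winv1 u q : act (winv u) (act u q) = q.
Proof.
  induction u as [|l u IH]; simpl. reflexivity.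
  rewrite winv_cons, act_app. simpl. unfold act at 2; simpl. fold act. 
  change (actT Z Z.opp u q) with (act u q). rewrite genZ_inv. auto.
Qed.

Lemma act_winv2 u q : act u (act (winv u) q) = q.
Proof.
  revert q. induction u as [|l u IH]; intro q; simpl. reflexivity.
  rewrite winv_cons, act_app. simpl. unfold act at 1; simpl. fold act.
  change (actT Z Z.opp u (act (winv u) (genT Z Z.opp (fst l) q))) with (act u (act (winv u) (genT Z Z.opp (fst l) q))).
  rewrite IH. apply genZ_inv.
Qed.

Definition tbl : list word := [
  [];
  [lt s1];
  [lt s2];
  [lt s3];
  [lt s2; lt s1];
  [lt s3; lt s1];
  [lt s1; lt s2];
  [lt s3; lt s2];
  [lt s2; lt s3];
  [lt s1; lt s2; lt s1];
  [lt s3; lt s2; lt s1];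
  [lt s2; lt s3; lt s1];
  [lt s3; lt s1; lt s2];
  [lt s2; lt s3; lt s2];
  [lt s1; lt s2; lt s3];
  [lt s3; lt s2; lt s3];
  [lt s3; lt s1; lt s2; lt s1];
  [lt s2; lt s3; lt s2; lt s1];
  [lt s1; lt s2; lt s3; lt s1];
  [lt s3; lt s2; lt s3; lt s1];
  [lt s2; lt s3; lt s1; lt s2];
  [lt s1; lt s2; lt s3; lt s2];
  [lt s3; lt s2; lt s3; lt s2];
  [lt s3; lt s1; lt s2; lt s3];
  [lt s2; lt s3; lt s1; lt s2; lt s1];
  [lt s1; lt s2; lt s3; lt s2; lt s1];
  [lt s3; lt s2; lt s3; lt s2; lt s1];
  [lt s3; lt s1; lt s2; lt s3; lt s1];
  [lt s1; lt s2; lt s3; lt s1; lt s2];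
  [lt s3; lt s2; lt s3; lt s1; lt s2];
  [lt s3; lt s1; lt s2; lt s3; lt s2];
  [lt s2; lt s3; lt s1; lt s2; lt s3];
  [lt s1; lt s2; lt s3; lt s1; lt s2; lt s1];
  [lt s3; lt s2; lt s3; lt s1; lt s2; lt s1];
  [lt s3; lt s1; lt s2; lt s3; lt s2; lt s1];
  [lt s2; lt s3; lt s1; lt s2; lt s3; lt s1];
  [lt s3; lt s1; lt s2; lt s3; lt s1; lt s2];
  [lt s2; lt s3; lt s1; lt s2; lt s3; lt s2];
  [lt s3; lt s2; lt s3; lt s1; lt s2; lt s3];
  [lt s3; lt s1; lt s2; lt s3; lt s1; lt s2; lt s1];
  [lt s2; lt s3; lt s1; lt s2; lt s3; lt s2; lt s1];
  [lt s3; lt s2; lt s3; lt s1; lt s2; lt s3; lt s1];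
  [lt s2; lt s3; lt s1; lt s2; lt s3; lt s1; lt s2];
  [lt s3; lt s2; lt s3; lt s1; lt s2; lt s3; lt s2];
  [lt s2; lt s3; lt s1; lt s2; lt s3; lt s1; lt s2; lt s1];
  [lt s3; lt s2; lt s3; lt s1; lt s2; lt s3; lt s2; lt s1];
  [lt s3; lt s2; lt s3; lt s1; lt s2; lt s3; lt s1; lt s2];
  [lt s3; lt s2; lt s3; lt s1; lt s2; lt s3; lt s1; lt s2; lt s1]].

Definition certs : list (list (nat*nat*bool)) := ([
  [];
  [];
  [];
  [(0,3,true)];
  [];
  [];
  [];
  [(0,4,true)];
  [];
  [(0,1,true)];
  [];
  [(0,5,true)];
  [];
  [(0,4,true)];
  [];
  [(0,1,true); (1,3,true)];
  [];
  [(0,5,true)];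
  [(0,3,true)];
  [(0,0,false)];
  [];
  [(0,1,true)];
  [];
  [(0,5,true)];
  [];
  [(0,4,true)];
  [];
  [(0,3,true)];
  [(0,0,false); (2,3,true)];
  [];
  [(0,1,true)];
  [];
  [(0,5,true)];
  [];
  [(0,4,true)];
  [];
  [(0,1,true); (1,3,true)];
  [];
  [(0,5,true)];
  [];
  [(0,4,true)];
  [];
  [(0,3,true)];
  [(0,0,false); (2,1,true)];
  [];
  [(0,1,true)];
  [(0,2,true)];
  [(0,5,true)];
  [(0,1,true); (1,3,true)];
  [];
  [(0,5,true)];
  [];
  [(0,4,true)];
  [];
  [(0,3,true)];
  [(0,0,false); (2,1,true); (3,3,true)];
  [];
  [(0,1,true)];
  [(0,2,true)];
  [(0,5,true)];
  [];
  [(0,4,true)];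
  [];
  [(0,3,true)];
  [(0,0,false); (2,1,true)];
  [];
  [(0,1,true)];
  [(0,2,true); (3,4,true)];
  [(0,5,true)];
  [(0,1,true); (1,3,true)];
  [];
  [(0,5,true)];
  [];
  [(0,4,true)];
  [];
  [(0,3,true)];
  [(0,0,false); (2,1,true)];
  [];
  [(0,1,true)];
  [(0,2,true); (3,4,true)];
  [(0,5,true)];
  [(0,1,true); (1,3,true)];
  [];
  [(0,5,true)];
  [(0,3,true)];
  [(0,0,false); (2,1,true); (3,3,true)];
  [];
  [(0,1,true)];
  [(0,2,true); (3,0,false)];
  [(0,5,true)];
  [(0,1,true); (1,3,true)];
  [];
  [(0,5,true)];
  [(2,1,false); (0,0,true); (2,2,true); (1,1,true)];
  [(0,4,true)];
  [];
  [(0,3,true)];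
  [(0,0,false); (2,1,true); (3,3,true)];
  [];
  [(0,1,true)];
  [(0,2,true); (3,0,false); (5,3,true)];
  [(0,5,true)];
  [(0,1,true); (1,3,true)];
  [];
  [(0,5,true)];
  [(2,1,false); (0,0,true); (2,2,true); (1,1,true)];
  [(0,4,true)];
  [];
  [(0,1,true); (1,3,true)];
  [];
  [(0,5,true)];
  [(2,1,false); (0,0,true); (2,2,true); (1,1,true); (5,4,true)];
  [(0,4,true)];
  [];
  [(0,1,true); (3,1,false); (1,0,true); (3,2,true); (2,1,true)];
  [(0,2,true); (3,0,false); (5,1,true)];
  [(0,5,true)];
  [(0,1,true); (1,3,true)];
  [];
  [(0,5,true)];
  [(2,1,false); (0,0,true); (2,2,true); (1,1,true); (5,4,true)];
  [(0,4,true)];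
  [];
  [(0,1,true); (3,1,false); (1,0,true); (3,2,true); (2,1,true)];
  [(0,2,true); (3,0,false); (5,1,true); (6,3,true)];
  [(0,5,true)];
  [(2,1,false); (0,0,true); (2,2,true); (1,1,true); (5,0,false)];
  [(0,4,true)];
  [];
  [(0,1,true); (3,1,false); (1,0,true); (3,2,true); (2,1,true); (6,4,true)];
  [(0,2,true); (3,0,false); (5,1,true)];
  [(0,5,true)];
  [(2,1,false); (0,0,true); (2,2,true); (1,1,true); (5,0,false); (7,3,true)];
  [(0,4,true)];
  [];
  [(0,1,true); (3,1,false); (1,0,true); (3,2,true); (2,1,true); (6,4,true)];
  [(0,2,true); (3,0,false); (5,1,true)];
  [(0,5,true)];
  [(0,1,true); (3,1,false); (1,0,true); (3,2,true); (2,1,true); (6,0,false)];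
  [(0,2,true); (3,0,false); (5,1,true); (6,3,true)];
  [(0,5,true)];
  [(0,1,true); (3,1,false); (1,0,true); (3,2,true); (2,1,true); (6,0,false); (8,3,true)];
  [(0,2,true); (3,0,false); (5,1,true); (6,3,true)];
  [(0,5,true)]])%nat.

Definition genb (a c : gen) : bool := match a, c with s1,s1 | s2,s2 | s3,s3 => true | _,_ => false end.
Lemma genb_spec a c : genb a c = true <-> a = c.
Proof. destruct a, c; simpl; split; congruence. Qed.
Definition sib (x y : SI) : bool := Nat.eqb (fst x) (fst y) && Bool.eqb (snd x) (snd y).
Definition eltb (x y : SI*SI*SI) : bool :=
  let '(a,b,c) := x in let '(a',b',c') := y in sib a a' && sib b b' && sib c c'.
Lemma sib_spec x y : sib x y = true -> x = y.
Proof. destruct x, y; unfold sib; simpl. rewrite andb_true_iff, Nat.eqb_eq, eqb_true_iff. intros [-> ->]; auto. Qed.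
Lemma eltb_spec x y : eltb x y = true -> x = y.
Proof. destruct x as [[a b] c], y as [[a' b'] c']; simpl. rewrite !andb_true_iff.
  intros [[H1 H2] H3]. apply sib_spec in H1, H2, H3. subst; auto. Qed.
Lemma sib_refl x : sib x x = true.
Proof. destruct x; unfold sib; simpl. rewrite Nat.eqb_refl, eqb_reflx. auto. Qed.
Lemma eltb_refl x : eltb x x = true.
Proof. destruct x as [[a b] c]; simpl; rewrite !sib_refl; auto. Qed.

Definition nfw (e : SI*SI*SI) : word :=
  match find (fun w => eltb (elt w) e) tbl with Some w => w | None => [] end.

Definition genS := genT SI negS.

Lemma tbl_closed : forallb (fun w => forallb (fun a => existsb (fun w' => eltb (elt w') (genS a (elt w))) tbl) [s1;s2;s3]) tbl = true.
Proof. vm_compute. reflexivity. Qed.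

Lemma elt_cons l w : elt (l :: w) = genS (fst l) (elt w).
Proof. reflexivity. Qed.

Lemma elt_in : forall w, exists w0, In w0 tbl /\ elt w0 = elt w.
Proof.
  induction w as [|l w IH].
  - exists []; split; [simpl; auto | reflexivity].
  - destruct IH as [w0 [Hin He]].
    pose proof tbl_closed as H. rewrite forallb_forall in H. specialize (H w0 Hin).
    rewrite forallb_forall in H. specialize (H (fst l)). 
    assert (In (fst l) [s1;s2;s3]) by (destruct (fst l); simpl; auto).
    specialize (H H0). rewrite existsb_exists in H. destruct H as [w' [Hw' He']].
    apply eltb_spec in He'. exists w'. split; auto. rewrite elt_cons, He', He. reflexivity.
Qed.

Lemma nfw_spec e : (exists w0, In w0 tbl /\ elt w0 = e) -> In (nfw e) tbl /\ elt (nfw e) = e.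
Proof.
  intros [w0 [Hin He]]. unfold nfw.
  destruct (find (fun w => eltb (elt w) e) tbl) eqn:Hf.
  - apply find_some in Hf. destruct Hf as [H1 H2]. apply eltb_spec in H2. auto.
  - exfalso. eapply find_none in Hf; eauto. subst. rewrite eltb_refl in Hf. discriminate.
Qed.

Fixpoint weqb (u v : word) : bool :=
  match u, v with
  | [], [] => true
  | (a,b)::u', (c,d)::v' => genb a c && Bool.eqb b d && weqb u' v'
  | _, _ => false end.
Lemma weqb_spec u v : weqb u v = true -> u = v.
Proof.
  revert v; induction u as [|[a b] u IH]; intros [|[c d] v]; simpl; try discriminate; auto.
  rewrite !andb_true_iff, genb_spec, eqb_true_iff. intros [[-> ->] H]. f_equal. auto.
Qed.

Definition apply_step (w:word) (st: nat*nat*bool) : option word :=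
  let '(p,k,d) := st in
  if Nat.ltb k 6 then
    let lr := nth k relsW ([],[]) in
    let a := if d then fst lr else snd lr in
    let b := if d then snd lr else fst lr in
    if weqb (firstn (length a) (skipn p w)) a
    then Some (firstn p w ++ b ++ skipn (length a) (skipn p w)) else None
  else None.
Fixpoint apply_steps w sts :=
  match sts with [] => Some w
  | st :: sts' => match apply_step w st with Some w' => apply_steps w' sts' | None => None end end.

Lemma apply_step_ok w st w' : apply_step w st = Some w' -> eqW w w'.
Proof.
  destruct st as [[p k] d]. unfold apply_step.
  destruct (Nat.ltb k 6) eqn:Hk; [|discriminate]. apply Nat.ltb_lt in Hk.
  assert (Hin : In (nth k relsW ([],[])) relsW) by (apply nth_In; exact Hk).
  destruct (nth k relsW ([],[])) as [l r]. simpl.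
  set (a := if d then l else r). set (b := if d then r else l).
  destruct (weqb (firstn (length a) (skipn p w)) a) eqn:He; [|discriminate].
  apply weqb_spec in He. intro Hw; inversion Hw; subst w'. clear Hw.
  assert (Hw : w = firstn p w ++ a ++ skipn (length a) (skipn p w)).
  { rewrite <- He at 1. rewrite (firstn_skipn (length a) (skipn p w)). rewrite firstn_skipn. reflexivity. }
  rewrite Hw at 1. unfold a, b. destruct d.
  - apply geq_rel; auto.
  - apply geq_sym. apply geq_rel; auto.
Qed.

Lemma apply_steps_ok sts : forall w w', apply_steps w sts = Some w' -> eqW w w'.
Proof.
  induction sts as [|st sts IH]; simpl; intros w w' H.
  - inversion H; subst; apply geq_refl.
  - destruct (apply_step w st) eqn:E; [|discriminate].
    eapply geq_trans. eapply apply_step_ok; eauto. apply (IH _ _ H).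
Qed.

Definition pairs := flat_map (fun w => map (fun a => (w,a)) [s1;s2;s3]) tbl.

Definition certs_ok : bool :=
  Nat.eqb (length pairs) (length certs) &&
  forallb (fun pc => let '((w,a),c) := pc in
    match apply_steps (lt a :: w) c with Some w' => weqb w' (nfw (genS a (elt w))) | None => false end)
   (combine pairs certs).

Lemma certs_ok_true : certs_ok = true.
Proof. vm_compute. reflexivity. Qed.

Lemma in_combine_ex {A B} (l1 : list A) (l2 : list B) x :
  length l1 = length l2 -> In x l1 -> exists y, In (x,y) (combine l1 l2).
Proof.
  revert l2; induction l1 as [|h l1 IH]; intros [|h2 l2] Hl Hx; simpl in *; try discriminate; try tauto.
  destruct Hx as [<-|Hx]. exists h2; auto.
  injection Hl as Hl. destruct (IH l2 Hl Hx) as [y Hy]. exists y; auto.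
Qed.

Lemma cert_lemma w a : In w tbl -> eqW (lt a :: w) (nfw (genS a (elt w))).
Proof.
  intro Hw. pose proof certs_ok_true as H. unfold certs_ok in H.
  apply andb_true_iff in H. destruct H as [Hl H]. apply Nat.eqb_eq in Hl.
  rewrite forallb_forall in H.
  assert (Hp : In (w,a) pairs).
  { unfold pairs. apply in_flat_map. exists w. split; auto. destruct a; simpl; auto. }
  destruct (in_combine_ex _ _ _ Hl Hp) as [c Hc]. specialize (H _ Hc). simpl in H.
  destruct (apply_steps (lt a :: w) c) eqn:E; [|discriminate].
  apply weqb_spec in H. subst. eapply apply_steps_ok; eauto.
Qed.

Lemma letter_norm a b w : eqW ((a,b) :: w) (lt a :: w).
Proof.
  destruct b; [|apply geq_refl].
  eapply geq_trans.
  - apply geq_sym. apply (geq_rel relsW [(a,true)] w [lt a; lt a] []).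
    unfold relsW; destruct a; simpl; tauto.
  - simpl. apply (geq_free relsW [] (lt a :: w) a true).
Qed.

Lemma nf_eq : forall w, eqW w (nfw (elt w)).
Proof.
  induction w as [|l w IH].
  - vm_compute. apply geq_refl.
  - destruct (elt_in w) as [w1 [Hw1 He1]].
    destruct (nfw_spec (elt w)) as [Hin He]. eauto.
    eapply geq_trans. apply geq_cons. apply IH.
    destruct l as [a b]. eapply geq_trans. apply letter_norm.
    rewrite elt_cons. simpl. rewrite <- He at 2. apply cert_lemma; auto.
Qed.

Lemma faithful u v : elt u = elt v -> eqW u v.
Proof. intro H. eapply geq_trans. apply nf_eq. rewrite H. apply geq_sym, nf_eq. Qed.

Local Open Scope Z_scope.

Definition p (i : gen) : Z3 := match i with s1 => (1,0,0) | s2 => (1,1,0) | s3 => (1,1,1) end.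

Lemma fix_p a i : a <> i -> genT Z Z.opp a (p i) = p i.
Proof. destruct a, i; simpl; intro H; try reflexivity; congruence. Qed.

Lemma avoid_fix i h : (forall l, In l h -> fst l <> i) -> act h (p i) = p i.
Proof.
  induction h as [|l h IH]; intro H; simpl. reflexivity.
  unfold act; simpl. fold act. rewrite IH. apply fix_p. apply H; simpl; auto.
  intros; apply H; simpl; auto.
Qed.

Definition Z3eqb (x y : Z3) : bool :=
  let '(a,b,c) := x in let '(a',b',c') := y in Z.eqb a a' && Z.eqb b b' && Z.eqb c c'.
Lemma Z3eqb_spec x y : Z3eqb x y = true <-> x = y.
Proof. destruct x as [[a b] c], y as [[a' b'] c']; simpl. rewrite !andb_true_iff, !Z.eqb_eq.
  split. intros [[-> ->] ->]; auto. intro H; inversion H; auto. Qed.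

Definition gens := [s1;s2;s3].
Lemma in_gens i : In i gens. Proof. destruct i; simpl; auto. Qed.

Lemma stab_check : forallb (fun w => forallb (fun i =>
   if Z3eqb (act w (p i)) (p i) then forallb (fun l => negb (genb (fst l) i)) w else true) gens) tbl = true.
Proof. vm_compute. reflexivity. Qed.

Lemma act_tbl g : exists w0, In w0 tbl /\ forall x, act g x = act w0 x.
Proof. destruct (elt_in g) as [w0 [H1 H2]]. exists w0; split; auto. intro x. rewrite !act_elt, H2. auto. Qed.

Lemma coset_char i g : coset relsW i g = fun w => act w (p i) = act g (p i).
Proof.
  apply functional_extensionality; intro w. apply propositional_extensionality. split.
  - intros [h [Hh Hw]]. apply eqW_act with (x := p i) in Hw. rewrite Hw, act_app, avoid_fix; auto.
  - intro H. set (u := winv g ++ w).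
    assert (Hu : act u (p i) = p i) by (unfold u; rewrite act_app, H, act_winv1; auto).
    destruct (elt_in u) as [w1 [Hw1 He1]].
    destruct (nfw_spec (elt u)) as [Hin He]; eauto.
    set (w0 := nfw (elt u)) in *.
    assert (Huw0 : eqW u w0) by apply nf_eq.
    assert (Ha : act w0 (p i) = p i) by (rewrite <- (eqW_act _ _ Huw0); auto).
    pose proof stab_check as S. rewrite forallb_forall in S. specialize (S w0 Hin).
    rewrite forallb_forall in S. specialize (S i (in_gens i)).
    rewrite (proj2 (Z3eqb_spec _ _) Ha) in S. rewrite forallb_forall in S.
    exists w0. split.
    + intros l Hl. specialize (S l Hl). intro E. rewrite E in S.
      destruct i; simpl in S; discriminate.
    + eapply geq_trans. apply geq_sym. apply (eqW_winv g w).
      apply geq_appl. exact Huw0.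
Qed.

Definition vW (c : gen * Z3) : vertex := (fst c, fun w => act w (p (fst c)) = snd c).

Lemma isVertex_W v : isVertex relsW v -> exists w0, In w0 tbl /\ v = vW (fst v, act w0 (p (fst v))).
Proof.
  intros [g Hg]. destruct (act_tbl g) as [w0 [Hin Hw]]. exists w0. split; auto.
  destruct v as [i S]; simpl in *. unfold vW; simpl. f_equal. rewrite Hg, coset_char, Hw. auto.
Qed.

Lemma vW_isVertex i g : isVertex relsW (vW (i, act g (p i))).
Proof. exists g. simpl. rewrite coset_char. reflexivity. Qed.

Lemma vW_inj i q i' q' g : q' = act g (p i') -> vW (i,q) = vW (i',q') -> i = i' /\ q = q'.
Proof.
  intros Hq E. unfold vW in E; simpl in E. inversion E; subst i'.
  pose proof (f_equal (fun f => f g) H1) as E2. simpl in E2.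
  assert (act g (p i) = q) by (rewrite E2; auto). split; congruence.
Qed.

Lemma actV_vW r i q : actV r (vW (i,q)) = vW (i, act r q).
Proof.
  unfold actV, vW; simpl. f_equal. apply functional_extensionality; intro w.
  apply propositional_extensionality. split.
  - intros [u [Hu Hw]]. apply eqW_act with (x := p i) in Hw. rewrite Hw, act_app, Hu. auto.
  - intro H. exists (winv r ++ w). split.
    + rewrite act_app, H, act_winv1. auto.
    + apply geq_sym, eqW_winv.
Qed.

Definition negk (k : nat) (v : Z3) : Z3 := let '(a,b,c) := v in
  match k with 0%nat => (-a,b,c) | 1%nat => (a,-b,c) | _ => (a,b,-c) end.
Definition negkS (k : nat) (v : SI*SI*SI) : SI*SI*SI := let '(a,b,c) := v in
  match k with 0%nat => (negS a,b,c) | 1%nat => (a,negS b,c) | _ => (a,b,negS c) end.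
Definition coord (k : nat) (v : Z3) : Z := let '(a,b,c) := v in
  match k with 0%nat => a | 1%nat => b | _ => c end.

Lemma refl_check : forallb (fun w => existsb (fun k => eltb (actT SI negS w (genS s3 sym0)) (negkS k (elt w))) [0;1;2]%nat) tbl = true.
Proof. vm_compute. reflexivity. Qed.

Lemma map3_negk y k v : map3 (interp y) (negkS k v) = negk k (map3 (interp y) v).
Proof. destruct v as [[a b] c]. destruct k as [|[|k]]; simpl; rewrite interp_neg; auto. Qed.

Lemma refl_class r : reflS3 r -> exists k, In k [0;1;2]%nat /\ forall x, act r x = negk k x.
Proof.
  intros [g Hg]. destruct (elt_in g) as [w0 [Hin He]].
  pose proof refl_check as C. rewrite forallb_forall in C. specialize (C w0 Hin).
  apply existsb_exists in C. destruct C as [k [Hk Ck]]. apply eltb_spec in Ck.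
  exists k. split; auto. intro x.
  rewrite (eqW_act _ _ Hg), !act_app.
  set (y := act (winv g) x).
  assert (Hx : x = act g y) by (unfold y; rewrite act_winv2; auto).
  rewrite Hx. rewrite !act_elt, <- He, <- !act_elt.
  assert (E : act [lt s3] y = map3 (interp y) (genS s3 sym0)) by (destruct y as [[a b] c]; reflexivity).
  rewrite E. unfold act at 1. rewrite (actT_map negS Z.opp (interp y) (interp_neg y)). rewrite Ck, map3_negk.
  rewrite <- act_elt. reflexivity.
Qed.

Local Open Scope Z_scope.

Definition slot := (Z*Z)%type.
Definition slots9 : list slot := [(0,0);(1,0);(-1,0);(0,1);(0,-1);(1,1);(1,-1);(-1,1);(-1,-1)].
Definition typeS (s : slot) : gen :=
  if Z.eqb (fst s) 0 && Z.eqb (snd s) 0 then s1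
  else if Z.eqb (fst s) 0 || Z.eqb (snd s) 0 then s2 else s3.
Definition qS (k : nat) (e : Z) (s : slot) : Z3 :=
  match k with 0%nat => (e, fst s, snd s) | 1%nat => (fst s, e, snd s) | _ => (fst s, snd s, e) end.
Definition tris8 : list (slot*slot*slot) :=
  [((0,0),(1,0),(1,1)); ((0,0),(1,0),(1,-1)); ((0,0),(-1,0),(-1,1)); ((0,0),(-1,0),(-1,-1));
   ((0,0),(0,1),(1,1)); ((0,0),(0,1),(-1,1)); ((0,0),(0,-1),(1,-1)); ((0,0),(0,-1),(-1,-1))].
Definition triList (j : slot*slot*slot) : list slot := let '(a,b,c) := j in [a;b;c].
Definition triL (kap : slot -> vertex) (j : slot*slot*slot) : list vertex := map kap (triList j).

Definition GoodK (K : list vertex -> Prop) (kap : slot -> vertex) : Prop :=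
  (forall s s', In s slots9 -> In s' slots9 -> kap s = kap s' -> s = s') /\
  (forall s, In s slots9 -> fst (kap s) = typeS s) /\
  (forall j, In j tris8 -> K (triL kap j)) /\
  (forall s, K s -> exists j, In j tris8 /\ incl s (triL kap j)).

Definition slotb (s t : slot) : bool := Z.eqb (fst s) (fst t) && Z.eqb (snd s) (snd t).
Definition memS (s : slot) (l : list slot) : bool := existsb (slotb s) l.
Lemma memS_In s l : memS s l = true -> In s l.
Proof. unfold memS. rewrite existsb_exists. intros [t [H1 H2]]. unfold slotb in H2.
  rewrite andb_true_iff, !Z.eqb_eq in H2. destruct s, t; simpl in *; destruct H2; subst; auto. Qed.

Definition F1 k e := forallb (fun s => existsb (fun w => Z3eqb (act w (p (typeS s))) (qS k e s)) tbl) slots9.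
Definition F2 k e := forallb (fun w => forallb (fun i =>
   if Z.ltb 0 (e * coord k (act w (p i))) then
     existsb (fun s => genb (typeS s) i && Z3eqb (qS k e s) (act w (p i))) slots9 else true) gens) tbl.
Definition F3 k e := forallb (fun s => existsb (fun w => Z3eqb (act w (p s1)) (qS k e (0,0)) &&
     Z3eqb (act w (p (typeS s))) (qS k e s)) tbl) slots9.
Definition F4 k e := forallb (fun j => existsb (fun w =>
     forallb (fun s => Z3eqb (act w (p (typeS s))) (qS k e s)) (triList j)) tbl) tris8.
Definition F5 k e := forallb (fun w => existsb (fun j => forallb (fun s =>
     if Z3eqb (qS k e s) (act w (p (typeS s))) then memS s (triList j) else true) slots9) tris8) tbl.
Definition F6 := forallb (fun w => forallb (fun i => forallb (fun i' => forallb (fun k =>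
     Z.leb 0 (coord k (act w (p i)) * coord k (act w (p i')))) [0;1;2]%nat) gens) gens) tbl.
Definition checks k e := F1 k e && F2 k e && F3 k e && F4 k e && F5 k e.

Lemma checks_all : F6 = true /\ forallb (fun k => forallb (fun e => checks k e) [1;-1]) [0;1;2]%nat = true.
Proof. split; vm_compute; reflexivity. Qed.

Lemma checks_of k e : In k [0;1;2]%nat -> In e [1;-1] -> checks k e = true.
Proof. intros Hk He. destruct checks_all as [_ C]. rewrite forallb_forall in C.
  specialize (C k Hk). rewrite forallb_forall in C. auto. Qed.

Lemma slots_tris j s : In j tris8 -> In s (triList j) -> In s slots9.
Proof. intros Hj Hs. simpl in Hj. repeat destruct Hj as [<-|Hj]; try contradiction;
  simpl in Hs; repeat destruct Hs as [<-|Hs]; try contradiction; simpl; tauto. Qed.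

Lemma typeS_center : typeS (0,0) = s1. Proof. reflexivity. Qed.

Lemma qS_inj k e s s' : In k [0;1;2]%nat -> qS k e s = qS k e s' -> s = s'.
Proof. destruct s, s'. intros Hk H. simpl in Hk; repeat destruct Hk as [<-|Hk]; try contradiction;
  simpl in H; inversion H; auto. Qed.

Lemma coord_qS k e s : In k [0;1;2]%nat -> coord k (qS k e s) = e.
Proof. intros Hk. simpl in Hk; repeat destruct Hk as [<-|Hk]; try contradiction; destruct s; reflexivity. Qed.

Lemma negk_fix k q : In k [0;1;2]%nat -> (negk k q = q <-> coord k q = 0).
Proof. intros Hk. destruct q as [[a b] c].
  simpl in Hk; repeat destruct Hk as [<-|Hk]; try contradiction; simpl; split; intro H;
  try (inversion H; lia); try (rewrite H; reflexivity). Qed.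

Lemma F6P w i i' k : In w tbl -> In k [0;1;2]%nat -> 0 <= coord k (act w (p i)) * coord k (act w (p i')).
Proof. intros Hw Hk. destruct checks_all as [C _]. unfold F6 in C.
  rewrite forallb_forall in C. specialize (C w Hw). rewrite forallb_forall in C. specialize (C i (in_gens i)).
  rewrite forallb_forall in C. specialize (C i' (in_gens i')). rewrite forallb_forall in C.
  specialize (C k Hk). apply Z.leb_le in C. exact C. Qed.


Theorem partC r v0 K : reflS3 r -> isVertex relsW v0 -> ~ fixedV r v0 ->
  isLift K (Ucomp r v0) -> exists kap, GoodK K kap.
Proof.
  intros Hr Hv0 Hnf HL.
  destruct (refl_class r Hr) as [k [Hk Hrk]].
  assert (Hfix : forall i q g, q = act g (p i) -> (fixedV r (vW (i,q)) <-> coord k q = 0)).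
  { intros i q g Hq. unfold fixedV. rewrite actV_vW, Hrk. split.
    - intro E. apply (vW_inj _ _ _ _ g) in E; [|auto]. destruct E as [_ E]. apply negk_fix; auto.
    - intro E. apply negk_fix in E; auto. rewrite E. reflexivity. }
  destruct (isVertex_W v0 Hv0) as [w00 [Hw00 Ev0]].
  set (i0 := fst v0) in *. set (q0 := act w00 (p i0)) in *.
  assert (Hq0 : coord k q0 <> 0). { intro E. apply Hnf. rewrite Ev0. apply (Hfix _ _ w00); auto. }
  set (e := Z.sgn (coord k q0)).
  assert (He : In e [1;-1]).
  { unfold e. destruct (Z.lt_trichotomy (coord k q0) 0) as [H|[H|H]].
    - rewrite Z.sgn_neg by auto. simpl; auto.
    - contradiction.
    - rewrite Z.sgn_pos by auto. simpl; auto. }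
  assert (He0 : 0 < e * coord k q0).
  { unfold e. rewrite Z.mul_comm, Z.sgn_abs. apply Z.abs_pos. auto. }
  pose proof (checks_of k e Hk He) as C. unfold checks in C. rewrite !andb_true_iff in C.
  destruct C as [[[[C1 C2] C3] C4] C5].
  assert (C1P : forall s, In s slots9 -> exists w, In w tbl /\ act w (p (typeS s)) = qS k e s).
  { intros s Hs. unfold F1 in C1. rewrite forallb_forall in C1. specialize (C1 s Hs).
    apply existsb_exists in C1. destruct C1 as [w [Hw E]]. apply Z3eqb_spec in E. eauto. }
  assert (C2P : forall w i, In w tbl -> 0 < e * coord k (act w (p i)) ->
            exists s, In s slots9 /\ typeS s = i /\ qS k e s = act w (p i)).
  { intros w i Hw H. unfold F2 in C2. rewrite forallb_forall in C2. specialize (C2 w Hw).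
    rewrite forallb_forall in C2. specialize (C2 i (in_gens i)).
    apply Z.ltb_lt in H. rewrite H in C2. apply existsb_exists in C2. destruct C2 as [s [Hs E]].
    apply andb_true_iff in E. destruct E as [E1 E2]. apply genb_spec in E1. apply Z3eqb_spec in E2. eauto. }
  assert (C3P : forall s, In s slots9 -> exists w, In w tbl /\ act w (p s1) = qS k e (0,0) /\
              act w (p (typeS s)) = qS k e s).
  { intros s Hs. unfold F3 in C3. rewrite forallb_forall in C3. specialize (C3 s Hs).
    apply existsb_exists in C3. destruct C3 as [w [Hw E]]. apply andb_true_iff in E.
    destruct E as [E1 E2]. apply Z3eqb_spec in E1. apply Z3eqb_spec in E2. eauto. }
  assert (C4P : forall j, In j tris8 -> exists w, In w tbl /\
              forall s, In s (triList j) -> act w (p (typeS s)) = qS k e s).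
  { intros j Hj. unfold F4 in C4. rewrite forallb_forall in C4. specialize (C4 j Hj).
    apply existsb_exists in C4. destruct C4 as [w [Hw E]]. rewrite forallb_forall in E.
    exists w. split; auto. intros s Hs. apply Z3eqb_spec. auto. }
  assert (C5P : forall w, In w tbl -> exists j, In j tris8 /\ forall s, In s slots9 ->
              qS k e s = act w (p (typeS s)) -> In s (triList j)).
  { intros w Hw. unfold F5 in C5. rewrite forallb_forall in C5. specialize (C5 w Hw).
    apply existsb_exists in C5. destruct C5 as [j [Hj E]]. rewrite forallb_forall in E.
    exists j. split; auto. intros s Hs Hq. specialize (E s Hs).
    rewrite (proj2 (Z3eqb_spec _ _) Hq) in E. apply memS_In; auto. }
  set (uS := fun s => vW (typeS s, qS k e s)).
  assert (HnfU : forall s, In s slots9 -> ~ fixedV r (uS s)).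
  { intros s Hs. destruct (C1P s Hs) as [w [_ Hw]]. unfold uS.
    rewrite (Hfix _ _ w) by auto. rewrite coord_qS by auto. destruct He as [<-|[<-|[]]]; lia. }
  assert (HisV : forall s, In s slots9 -> isVertex relsW (uS s)).
  { intros s Hs. destruct (C1P s Hs) as [w [_ Hw]]. unfold uS. rewrite <- Hw. apply vW_isVertex. }
  set (reach := clos_refl_trans vertex (adjNF r) v0).
  assert (Hem : forall v, reach v -> exists i q w, In w tbl /\ v = vW (i,q) /\ q = act w (p i) /\
                 0 < e * coord k q).
  { intros v Hv. unfold reach in Hv. apply clos_rt_rtn1 in Hv. induction Hv as [|y z Hyz Hy IH].
    - exists i0, q0, w00. auto.
    - destruct IH as [i [q [wy [Hwy [Ey [Eq Hpos]]]]]].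
      destruct Hyz as [HvY [HvZ [HnY [HnZ HS]]]].
      destruct HS as [_ [_ [w Hw]]].
      destruct (isVertex_W z HvZ) as [w1 [Hw1 Ez]].
      exists (fst z), (act w1 (p (fst z))), w1. split; auto. split; auto. split; auto.
      assert (Hc : coord k (act w1 (p (fst z))) <> 0).
      { intro E. apply HnZ. rewrite Ez. apply (Hfix _ _ w1); auto. }
      assert (Wy : snd y w) by (apply Hw; simpl; auto).
      assert (Wz : snd z w) by (apply Hw; simpl; auto).
      rewrite Ey in Wy. simpl in Wy. rewrite Ez in Wz. simpl in Wz.
      destruct (act_tbl w) as [w0 [Hw0 Ew]].
      pose proof (F6P w0 i (fst z) k Hw0 Hk) as P6. rewrite <- !Ew, Wy, Wz in P6.
      destruct He as [Ee|[Ee|[]]]; rewrite <- Ee in *; nia. }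
  assert (Hslot : forall v, reach v -> exists s, In s slots9 /\ v = uS s).
  { intros v Hv. destruct (Hem v Hv) as [i [q [w [Hw [Ev [Eq Hpos]]]]]].
    subst q. destruct (C2P w i Hw Hpos) as [s [Hs [Ht Hq]]]. exists s. split; auto.
    rewrite Ev. unfold uS. rewrite Ht, Hq. reflexivity. }
  assert (Hc9 : In (0,0) slots9) by (simpl; auto).
  assert (Hadj : forall s, In s slots9 -> adjNF r (uS s) (uS (0,0)) /\ adjNF r (uS (0,0)) (uS s)).
  { intros s Hs. destruct (C3P s Hs) as [w [_ [Hw1 Hw2]]].
    assert (Hsx : forall a b, In a [uS s; uS (0,0)] -> In b [uS s; uS (0,0)] -> simplexW [a;b]).
    { intros a b Ha Hb. split; [discriminate|]. split.
      - intros v Hv. simpl in Ha, Hb, Hv. destruct Hv as [<-|[<-|[]]];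
        [destruct Ha as [<-|[<-|[]]] | destruct Hb as [<-|[<-|[]]]]; auto.
      - exists w. intros v Hv. simpl in Ha, Hb, Hv. destruct Hv as [<-|[<-|[]]];
        [destruct Ha as [<-|[<-|[]]] | destruct Hb as [<-|[<-|[]]]]; unfold uS, vW; simpl; auto. }
    split; repeat split; auto; apply Hsx; simpl; auto. }
  assert (Hreach : forall s, In s slots9 -> reach (uS s)).
  { intros s Hs. destruct (Hslot v0 (rt_refl _ _ _)) as [s0 [Hs0 E0]].
    apply rt_trans with (uS (0,0)); apply rt_step.
    - rewrite E0 at 1. apply Hadj; auto.
    - apply Hadj; auto. }
  destruct HL as [L1 [L2 [L3 [L4 L5]]]].
  assert (Hk1 : forall s, exists v, In s slots9 -> exists S, K S /\ In v S /\ rhoV v = uS s).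
  { intro s. destruct (classic (In s slots9)) as [Hs|Hs]; [|exists v0; tauto].
    destruct (C1P s Hs) as [w [_ Hw]].
    assert (U1 : Ucomp r v0 [uS s]).
    { split.
      - split; [discriminate|]. split.
        + intros v [<-|[]]. apply HisV; auto.
        + exists w. intros v [<-|[]]. unfold uS, vW; simpl. auto.
      - intros v [<-|[]]. split; [apply HnfU|apply Hreach]; auto. }
    destruct (L4 _ U1) as [S [HS Hiff]].
    assert (In (uS s) (map rhoV S)) by (apply Hiff; simpl; auto).
    apply in_map_iff in H. destruct H as [v [Ev Hv]]. exists v. intros _. eauto. }
  destruct (functional_choice _ Hk1) as [kap Hkap].
  exists kap.
  assert (Huniq : forall v S s, K S -> In v S -> In s slots9 -> rhoV v = uS s -> v = kap s).
  { intros v S s HS Hv Hs E. destruct (Hkap s Hs) as [S' [HS' [Hv' E']]].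
    apply (L5 v (kap s) S S'); auto. congruence. }
  split; [|split; [|split]].
  - intros s s' Hs Hs' E.
    destruct (Hkap s Hs) as [_ [_ [_ E1]]]. destruct (Hkap s' Hs') as [_ [_ [_ E2]]].
    rewrite E in E1. rewrite E1 in E2. unfold uS in E2.
    destruct (C1P s' Hs') as [w [_ Hw]].
    apply (vW_inj _ _ _ _ w) in E2; [|auto]. destruct E2 as [_ E2].
    apply (qS_inj k e); auto.
  - intros s Hs. destruct (Hkap s Hs) as [_ [_ [_ E1]]].
    change (fst (kap s)) with (fst (rhoV (kap s))). rewrite E1. reflexivity.
  - intros j Hj.
    assert (Ht : Ucomp r v0 (map uS (triList j))).
    { destruct (C4P j Hj) as [w [_ Hw]]. split.
      - split; [destruct j as [[a b] c]; discriminate|]. split.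
        + intros v Hv. apply in_map_iff in Hv. destruct Hv as [s [<- Hs]].
          apply HisV. eapply slots_tris; eauto.
        + exists w. intros v Hv. apply in_map_iff in Hv. destruct Hv as [s [<- Hs]].
          unfold uS, vW; simpl. auto.
      - intros v Hv. apply in_map_iff in Hv. destruct Hv as [s [<- Hs]].
        split; [apply HnfU | apply Hreach]; eapply slots_tris; eauto. }
    destruct (L4 _ Ht) as [S [HS Hiff]].
    apply (L2 S); auto.
    + unfold triL. destruct j as [[a b] c]; discriminate.
    + intros v Hv. unfold triL in Hv. apply in_map_iff in Hv. destruct Hv as [s [<- Hs]].
      assert (Hs9 : In s slots9) by (eapply slots_tris; eauto).
      assert (In (uS s) (map rhoV S)) by (apply Hiff; apply in_map; auto).
      apply in_map_iff in H. destruct H as [v [Ev Hv]].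
      rewrite <- (Huniq v S s); auto.
  - intros S HS. destruct (L3 S HS) as [[_ [_ [w Hw]]] Hall].
    destruct (act_tbl w) as [w0 [Hw0 Ew]].
    destruct (C5P w0 Hw0) as [j [Hj Hjs]]. exists j. split; auto.
    intros v Hv.
    assert (Hin : In (rhoV v) (map rhoV S)) by (apply in_map; auto).
    destruct (Hall _ Hin) as [_ Hre].
    destruct (Hslot _ Hre) as [s [Hs Es]].
    assert (Wv := Hw _ Hin). rewrite Es in Wv. unfold uS, vW in Wv; simpl in Wv.
    rewrite Ew in Wv.
    rewrite (Huniq v S s); auto. unfold triL. apply in_map. apply Hjs; auto.
Qed.

Local Open Scope R_scope.

Lemma sq2_ge0 a b : 0 <= a ^ 2 + b ^ 2.
Proof. nra. Qed.

Lemma sum_sq0 x y : x ^ 2 + y ^ 2 = 0 -> x = 0 /\ y = 0.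
Proof. intro H. split; nra. Qed.

Lemma eucl_ge0 p q : 0 <= eucl p q.
Proof. apply sqrt_pos. Qed.

Lemma eucl_sym p q : eucl p q = eucl q p.
Proof. unfold eucl. f_equal. ring. Qed.

Lemma eucl_sq p q : (eucl p q)^2 = (fst p - fst q)^2 + (snd p - snd q)^2.
Proof. unfold eucl. rewrite pow2_sqrt by apply sq2_ge0. reflexivity. Qed.

Lemma eucl_zero p q : eucl p q = 0 -> p = q.
Proof. intro H. pose proof (eucl_sq p q) as E. rewrite H in E.
  destruct p as [a b], q as [c d]; cbn [fst snd] in *. replace (0^2) with 0 in E by ring. symmetry in E. apply sum_sq0 in E.
  destruct E; f_equal; lra. Qed.

Lemma eucl_eq_of_sq p q r s : (fst p - fst q)^2 + (snd p - snd q)^2 = (fst r - fst s)^2 + (snd r - snd s)^2 ->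
  eucl p q = eucl r s.
Proof. intro H. unfold eucl. rewrite H. reflexivity. Qed.

Lemma eucl_tri p q r : eucl p r <= eucl p q + eucl q r.
Proof.
  destruct p as [p1 p2], q as [q1 q2], r as [r1 r2]. unfold eucl; cbn [fst snd].
  set (a1 := p1 - q1). set (a2 := p2 - q2). set (b1 := q1 - r1). set (b2 := q2 - r2).
  replace (p1 - r1) with (a1 + b1) by (unfold a1, b1; ring).
  replace (p2 - r2) with (a2 + b2) by (unfold a2, b2; ring).
  pose proof (sqrt_cauchy a1 a2 b1 b2) as CS. unfold Rsqr in CS.
  set (A := a1 ^ 2 + a2 ^ 2). set (B := b1 ^ 2 + b2 ^ 2).
  replace (a1 * a1 + a2 * a2) with A in CS by (unfold A; ring).
  replace (b1 * b1 + b2 * b2) with B in CS by (unfold B; ring).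
  assert (HA : 0 <= A) by (unfold A; nra). assert (HB : 0 <= B) by (unfold B; nra).
  rewrite <- (sqrt_pow2 (sqrt A + sqrt B)) by (pose proof (sqrt_pos A); pose proof (sqrt_pos B); lra).
  apply sqrt_le_1_alt.
  replace ((sqrt A + sqrt B) ^ 2) with ((sqrt A)^2 + (sqrt B)^2 + 2 * (sqrt A * sqrt B)) by ring.
  rewrite !pow2_sqrt by auto. replace ((a1 + b1) ^ 2 + (a2 + b2) ^ 2) with (A + B + 2 * (a1 * b1 + a2 * b2)) by (unfold A, B; ring). lra.
Qed.

Definition mid (a b : R * R) (t : R) : R * R :=
  (fst a + t * (fst b - fst a), snd a + t * (snd b - snd a)).

Lemma cmp_mid a b l s : cmp a b l s = mid a b (s / l).
Proof. reflexivity. Qed.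

Lemma eucl_mid1 p q t : 0 <= t -> eucl p (mid p q t) = t * eucl p q.
Proof.
  intro Ht. unfold eucl, mid; cbn [fst snd].
  replace ((fst p - (fst p + t * (fst q - fst p))) ^ 2 + (snd p - (snd p + t * (snd q - snd p))) ^ 2)
    with (t^2 * ((fst p - fst q) ^ 2 + (snd p - snd q) ^ 2)) by ring.
  rewrite sqrt_mult by (apply pow2_ge_0 || apply sq2_ge0). rewrite sqrt_pow2 by auto. reflexivity.
Qed.

Lemma eucl_mid2 p q t : t <= 1 -> eucl (mid p q t) q = (1 - t) * eucl p q.
Proof.
  intro Ht. unfold eucl, mid; cbn [fst snd].
  replace ((fst p + t * (fst q - fst p) - fst q) ^ 2 + (snd p + t * (snd q - snd p) - snd q) ^ 2)
    with ((1-t)^2 * ((fst p - fst q) ^ 2 + (snd p - snd q) ^ 2)) by ring.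
  rewrite sqrt_mult by (apply pow2_ge_0 || apply sq2_ge0). rewrite sqrt_pow2 by lra. reflexivity.
Qed.

Lemma eucl_mid12 p q s t : eucl (mid p q s) (mid p q t) = Rabs (s - t) * eucl p q.
Proof.
  unfold eucl, mid; cbn [fst snd].
  replace ((fst p + s * (fst q - fst p) - (fst p + t * (fst q - fst p))) ^ 2 +
           (snd p + s * (snd q - snd p) - (snd p + t * (snd q - snd p))) ^ 2)
    with ((s - t)^2 * ((fst p - fst q) ^ 2 + (snd p - snd q) ^ 2)) by ring.
  rewrite sqrt_mult by (apply pow2_ge_0 || apply sq2_ge0). rewrite <- sqrt_Rsqr_abs. unfold Rsqr. f_equal. f_equal. ring.
Qed.

Lemma mid_0 p q : mid p q 0 = p.
Proof. unfold mid. destruct p; simpl; f_equal; ring. Qed.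
Lemma mid_1 p q : mid p q 1 = q.
Proof. unfold mid. destruct q; simpl; f_equal; ring. Qed.

Lemma eq_case X Y Z l s : 0 <= s <= l -> eucl X Z = s -> eucl Z Y = l - s -> eucl X Y = l ->
  Z = cmp X Y l s.
Proof.
  intros Hs H1 H2 H3.
  destruct (Req_dec l 0) as [Hl|Hl].
  - assert (Hs0 : s = 0) by lra. rewrite Hs0 in H1. apply eucl_zero in H1. subst X. rewrite Hs0, Hl.
    unfold cmp. destruct Z; simpl; f_equal; unfold Rdiv; ring.
  - assert (Hl' : 0 < l) by lra.
    pose proof (eucl_sq X Z) as E1. pose proof (eucl_sq Z Y) as E2. pose proof (eucl_sq X Y) as E3.
    rewrite H1 in E1. rewrite H2 in E2. rewrite H3 in E3.
    destruct X as [x1 x2], Y as [y1 y2], Z as [z1 z2]; cbn [fst snd] in *.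
    set (u1 := z1 - x1) in *. set (u2 := z2 - x2). set (v1 := y1 - z1). set (v2 := y2 - z2).
    assert (Eu : u1^2 + u2^2 = s^2) by (unfold u1, u2; rewrite E1; ring).
    assert (Ev : v1^2 + v2^2 = (l-s)^2) by (unfold v1, v2; rewrite E2; ring).
    assert (Euv : (u1+v1)^2 + (u2+v2)^2 = l^2) by (unfold u1, u2, v1, v2; rewrite E3; ring).
    assert (Dot : u1*v1 + u2*v2 = s*(l-s)) by nra.
    assert (Z0 : ((l-s)*u1 - s*v1)^2 + ((l-s)*u2 - s*v2)^2 = 0).
    { replace (((l-s)*u1 - s*v1)^2 + ((l-s)*u2 - s*v2)^2) with
        ((l-s)^2*(u1^2+u2^2) + s^2*(v1^2+v2^2) - 2*s*(l-s)*(u1*v1+u2*v2)) by ring.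
      rewrite Eu, Ev, Dot. ring. }
    destruct (sum_sq0 _ _ Z0) as [A1 A2].
    unfold cmp; cbn [fst snd]. unfold u1, v1, u2, v2 in *.
    assert (Hz1 : z1 = x1 + s / l * (y1 - x1)).
    { apply (Rmult_eq_reg_l l); [|lra]. replace (l * (x1 + s / l * (y1 - x1))) with (l * x1 + s * (y1 - x1)) by (field; lra). lra. }
    assert (Hz2 : z2 = x2 + s / l * (y2 - x2)).
    { apply (Rmult_eq_reg_l l); [|lra]. replace (l * (x2 + s / l * (y2 - x2))) with (l * x2 + s * (y2 - x2)) by (field; lra). lra. }
    rewrite <- Hz1, <- Hz2. reflexivity.
Qed.

Lemma quad_id (d1 d2 : R) (P1 P2 P3 : R * R) :
  let d3 := - d1 - d2 in
  (d1 * fst P1 + d2 * fst P2 + d3 * fst P3)^2 + (d1 * snd P1 + d2 * snd P2 + d3 * snd P3)^2 =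
  - (d1 * d2 * (eucl P1 P2)^2 + d1 * d3 * (eucl P1 P3)^2 + d2 * d3 * (eucl P2 P3)^2).
Proof. intro d3. rewrite !eucl_sq. unfold d3. ring. Qed.

Local Open Scope R_scope.

Ltac tri_cases H := simpl in H;
  repeat (let E := fresh "E" in destruct H as [E|H];
     [first [injection E as <- <- <- | subst] |]); try contradiction.

Definition sumS (f : slot -> R) (l : list slot) : R := fold_right (fun s acc => f s + acc) 0 l.
Definition Fk (kap : slot -> vertex) (x : pt) : R * R :=
  (sumS (fun s => x (kap s) * IZR (fst s)) slots9, sumS (fun s => x (kap s) * IZR (snd s)) slots9).

Lemma memS_true s l : In s l -> memS s l = true.
Proof. intro H. unfold memS. apply existsb_exists. exists s. split; auto.
  unfold slotb. rewrite !Z.eqb_refl. reflexivity. Qed.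

Lemma sumS_filter f L l : (forall s, In s l -> ~ In s L -> f s = 0) ->
  sumS f l = sumS f (filter (fun s => memS s L) l).
Proof.
  induction l as [|a l IH]; intro H; simpl. reflexivity.
  destruct (memS a L) eqn:E; simpl.
  - rewrite IH by (intros; apply H; simpl; auto). reflexivity.
  - assert (Ha : ~ In a L) by (intro Ha; rewrite memS_true in E; auto; discriminate).
    rewrite (H a) by (simpl; auto). rewrite IH by (intros; apply H; simpl; auto). ring.
Qed.

Lemma filt_tri j : In j tris8 -> filter (fun s => memS s (triList j)) slots9 = triList j.
Proof. intro Hj. tri_cases Hj; reflexivity. Qed.

Lemma tri_slots j s : In j tris8 -> In s (triList j) -> In s slots9.
Proof. apply slots_tris. Qed.

Lemma kap_notin K kap (HG : GoodK K kap) j s : In j tris8 -> In s slots9 -> ~ In s (triList j) ->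
  ~ In (kap s) (triL kap j).
Proof.
  intros Hj Hs Hn Hi. destruct HG as [G0 _]. unfold triL in Hi. apply in_map_iff in Hi.
  destruct Hi as [t [Et Ht]]. apply G0 in Et; auto. subst; auto. eapply tri_slots; eauto.
Qed.

Lemma F_tri K kap (HG : GoodK K kap) j x : In j tris8 -> (forall v, x v <> 0 -> In v (triL kap j)) ->
  Fk kap x = (sumS (fun s => x (kap s) * IZR (fst s)) (triList j), sumS (fun s => x (kap s) * IZR (snd s)) (triList j)).
Proof.
  intros Hj Hx. unfold Fk.
  assert (Hz : forall s, In s slots9 -> ~ In s (triList j) -> x (kap s) = 0).
  { intros s Hs Hn. destruct (Req_dec (x (kap s)) 0); auto. exfalso. apply (kap_notin K kap HG j s); auto. }
  rewrite (sumS_filter _ (triList j)), (sumS_filter (fun s => x (kap s) * IZR (snd s)) (triList j)).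
  - rewrite filt_tri; auto.
  - intros s Hs Hn. rewrite Hz; auto; ring.
  - intros s Hs Hn. rewrite Hz; auto; ring.
Qed.

Definition vdec (u v : vertex) : {u = v} + {u <> v} := excluded_middle_informative (u = v).

Definition lam1 (j : slot*slot*slot) (p : R*R) : R :=
  let '(a,b,c) := j in 1 - (fst p * IZR (fst b) + snd p * IZR (snd b)).
Definition lam3 (j : slot*slot*slot) (p : R*R) : R :=
  let '(a,b,c) := j in fst p * (IZR (fst c) - IZR (fst b)) + snd p * (IZR (snd c) - IZR (snd b)).
Definition lam2 (j : slot*slot*slot) (p : R*R) : R :=
  let '(a,b,c) := j in (fst p * IZR (fst b) + snd p * IZR (snd b)) - lam3 j p.

Definition bary (kap : slot -> vertex) (j : slot*slot*slot) (p : R*R) : pt :=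
  let '(a,b,c) := j in fun v =>
    if vdec v (kap a) then lam1 j p else if vdec v (kap b) then lam2 j p
    else if vdec v (kap c) then lam3 j p else 0.

Definition inT j p := 0 <= lam1 j p /\ 0 <= lam2 j p /\ 0 <= lam3 j p.
Definition Qsq (p : R*R) := -1 <= fst p <= 1 /\ -1 <= snd p <= 1.

Lemma tri_distinct K kap (HG : GoodK K kap) a b c : In (a,b,c) tris8 ->
  kap a <> kap b /\ kap a <> kap c /\ kap b <> kap c /\
  fst (kap a) = s1 /\ fst (kap b) = s2 /\ fst (kap c) = s3.
Proof.
  intro Hj. destruct HG as [G0 [G1 _]].
  assert (Ha : In a slots9) by (apply (tri_slots (a,b,c)); simpl; auto).
  assert (Hb : In b slots9) by (apply (tri_slots (a,b,c)); simpl; auto).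
  assert (Hc : In c slots9) by (apply (tri_slots (a,b,c)); simpl; auto).
  rewrite (G1 a Ha), (G1 b Hb), (G1 c Hc).
  assert (D : a <> b /\ a <> c /\ b <> c /\ typeS a = s1 /\ typeS b = s2 /\ typeS c = s3)
    by (clear -Hj; tri_cases Hj; repeat split; try discriminate; reflexivity).
  destruct D as [D1 [D2 [D3 D4]]].
  split; [intro E; apply G0 in E; auto|].
  split; [intro E; apply G0 in E; auto|].
  split; [intro E; apply G0 in E; auto|]. exact D4.
Qed.

Lemma bary_vals K kap (HG : GoodK K kap) a b c p : In (a,b,c) tris8 ->
  bary kap (a,b,c) p (kap a) = lam1 (a,b,c) p /\ bary kap (a,b,c) p (kap b) = lam2 (a,b,c) p /\
  bary kap (a,b,c) p (kap c) = lam3 (a,b,c) p /\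
  (forall v, ~ In v (triL kap (a,b,c)) -> bary kap (a,b,c) p v = 0).
Proof.
  intro Hj. destruct (tri_distinct K kap HG a b c Hj) as [D1 [D2 [D3 _]]].
  unfold bary. repeat split.
  - destruct (vdec (kap a) (kap a)); congruence.
  - destruct (vdec (kap b) (kap a)); [congruence|]. destruct (vdec (kap b) (kap b)); congruence.
  - destruct (vdec (kap c) (kap a)); [congruence|]. destruct (vdec (kap c) (kap b)); [congruence|].
    destruct (vdec (kap c) (kap c)); congruence.
  - intros v Hv. unfold triL in Hv; simpl in Hv.
    destruct (vdec v (kap a)); [subst; tauto|]. destruct (vdec v (kap b)); [subst; tauto|].
    destruct (vdec v (kap c)); [subst; tauto|]. reflexivity.
Qed.

Lemma sumL_app l1 l2 f : sumL (l1 ++ l2) f = sumL l1 f + sumL l2 f.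
Proof. induction l1; simpl; [ring|]. rewrite IHl1; ring. Qed.

Lemma sumL_perm l1 l2 f : Permutation l1 l2 -> sumL l1 f = sumL l2 f.
Proof. induction 1; simpl; try lra. Qed.

Lemma sumL_zero l f : (forall v, In v l -> f v = 0) -> sumL l f = 0.
Proof. induction l; simpl; intros H; [reflexivity|]. rewrite H, IHl; auto. ring. Qed.

Lemma sumL_split l f (P : vertex -> bool) : sumL l f = sumL (filter P l) f + sumL (filter (fun v => negb (P v)) l) f.
Proof. induction l as [|a l IH]; simpl; [ring|]. destruct (P a); simpl; rewrite IH; ring. Qed.

Lemma sumL_incl s t f : NoDup s -> NoDup t -> incl s t -> (forall v, f v <> 0 -> In v s) ->
  sumL s f = sumL t f.
Proof.
  intros Hs Ht Hst Hf.
  set (P := fun v => if excluded_middle_informative (In v s) then true else false).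
  rewrite (sumL_split t f P).
  rewrite (sumL_zero (filter (fun v => negb (P v)) t)).
  - rewrite Rplus_0_r. apply sumL_perm. apply NoDup_Permutation; auto.
    + apply NoDup_filter; auto.
    + intro v. rewrite filter_In. unfold P. destruct (excluded_middle_informative (In v s)); split; intuition.
  - intros v Hv. rewrite filter_In in Hv. unfold P in Hv.
    destruct (excluded_middle_informative (In v s)); [simpl in Hv; intuition discriminate|].
    destruct (Req_dec (f v) 0); auto. exfalso; auto.
Qed.

Lemma triL_NoDup K kap (HG : GoodK K kap) j : In j tris8 -> NoDup (triL kap j).
Proof.
  intro Hj. destruct j as [[a b] c]. destruct (tri_distinct K kap HG a b c Hj) as [D1 [D2 [D3 _]]].
  unfold triL; simpl. constructor; [simpl; intuition|]. constructor; [simpl; intuition|].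
  constructor; [simpl; auto|constructor].
Qed.

Lemma image_tri K kap (HG : GoodK K kap) a b c s x : In (a,b,c) tris8 -> NoDup s -> incl s (triL kap (a,b,c)) ->
  (forall v, x v <> 0 -> In v s) ->
  image s x = (x (kap b) + x (kap c), x (kap c)).
Proof.
  intros Hj Hs Hi Hx. destruct (tri_distinct K kap HG a b c Hj) as [_ [_ [_ [T1 [T2 T3]]]]].
  unfold image. rewrite !(sumL_incl s (triL kap (a,b,c))); auto.
  - unfold triL, Defs.pos; simpl. rewrite T1, T2, T3. simpl. f_equal; ring.
  - apply (triL_NoDup K kap HG); auto.
  - intros v Hv. apply Hx. intro E. apply Hv. rewrite E. ring.
  - apply (triL_NoDup K kap HG); auto.
  - intros v Hv. apply Hx. intro E. apply Hv. rewrite E. ring.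
Qed.

Local Open Scope R_scope.

Lemma lam_sum j p : lam1 j p + lam2 j p + lam3 j p = 1.
Proof. destruct j as [[a b] c]. unfold lam1, lam2, lam3. ring. Qed.

Lemma Kpiece K kap (HG : GoodK K kap) x y d : pieceLen K x y d -> d = eucl (Fk kap x) (Fk kap y).
Proof.
  intros [s [Ks [Nd [Sx [Sy ->]]]]].
  pose proof HG as [_ [_ [_ G3]]].
  destruct (G3 s Ks) as [j [Hj Hinc]]. destruct j as [[a b] c].
  rewrite (image_tri K kap HG a b c s x), (image_tri K kap HG a b c s y); auto; try apply Sx; try apply Sy.
  rewrite (F_tri K kap HG (a,b,c) x), (F_tri K kap HG (a,b,c) y); auto.
  - apply eucl_eq_of_sq. unfold sumS. cbn [fold_right triList fst snd].
    clear -Hj. tri_cases Hj; cbn [fst snd]; ring.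
  - intros v Hv. apply Hinc. apply Sy; auto.
  - intros v Hv. apply Hinc. apply Sx; auto.
Qed.

Lemma bary_supp K kap (HG : GoodK K kap) j p v : In j tris8 -> bary kap j p v <> 0 -> In v (triL kap j).
Proof.
  intros Hj H. destruct j as [[a b] c]. destruct (classic (In v (triL kap (a,b,c)))) as [I|I]; auto.
  destruct (bary_vals K kap HG a b c p Hj) as [_ [_ [_ V]]]. exfalso. apply H, V, I.
Qed.

Lemma bary_inS K kap (HG : GoodK K kap) j p : In j tris8 -> inT j p -> inSimplex (triL kap j) (bary kap j p).
Proof.
  intros Hj HT. split; [|split].
  - intros v Hv. eapply bary_supp; eauto.
  - destruct HT as [T1 [T2 T3]]. destruct j as [[a b] c]. intro v. unfold bary.
    destruct (vdec v (kap a)); auto. destruct (vdec v (kap b)); auto. destruct (vdec v (kap c)); auto. lra.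
  - destruct j as [[a b] c]. destruct (bary_vals K kap HG a b c p Hj) as [V1 [V2 [V3 _]]].
    unfold triL; cbn [map sumL triList]. rewrite V1, V2, V3. pose proof (lam_sum (a,b,c) p). lra.
Qed.

Lemma isPt_bary K kap (HG : GoodK K kap) j p : In j tris8 -> inT j p -> isPt K (bary kap j p).
Proof.
  intros Hj HT. exists (triL kap j). pose proof HG as [_ [_ [G2 _]]].
  split; [auto|split]. apply (triL_NoDup K kap HG); auto. apply (bary_inS K kap HG); auto.
Qed.

Lemma F_bary K kap (HG : GoodK K kap) j p : In j tris8 -> Fk kap (bary kap j p) = p.
Proof.
  intros Hj. rewrite (F_tri K kap HG j); [|auto|intros v Hv; eapply bary_supp; eauto].
  destruct j as [[a b] c]. destruct (bary_vals K kap HG a b c p Hj) as [V1 [V2 [V3 _]]].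
  unfold sumS. cbn [fold_right triList]. rewrite V1, V2, V3.
  clear -Hj. destruct p as [px py]. tri_cases Hj; unfold lam1, lam2, lam3; cbn [fst snd]; f_equal; ring.
Qed.

Lemma inv_tri K kap (HG : GoodK K kap) j x : In j tris8 -> (forall v, x v <> 0 -> In v (triL kap j)) ->
  (forall v, 0 <= x v) -> sumL (triL kap j) x = 1 ->
  x = bary kap j (Fk kap x) /\ inT j (Fk kap x).
Proof.
  intros Hj Hs Hn Hsum.
  rewrite (F_tri K kap HG j x Hj Hs).
  destruct j as [[a b] c]. destruct (bary_vals K kap HG a b c (Fk kap x) Hj) as [V1 [V2 [V3 V4]]].
  rewrite (F_tri K kap HG (a,b,c) x Hj Hs) in V1, V2, V3, V4.
  unfold triL in Hsum; simpl in Hsum.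
  assert (L : lam1 (a,b,c) (sumS (fun s => x (kap s) * IZR (fst s)) (triList (a,b,c)),
                 sumS (fun s => x (kap s) * IZR (snd s)) (triList (a,b,c))) = x (kap a) /\
              lam2 (a,b,c) (sumS (fun s => x (kap s) * IZR (fst s)) (triList (a,b,c)),
                 sumS (fun s => x (kap s) * IZR (snd s)) (triList (a,b,c))) = x (kap b) /\
              lam3 (a,b,c) (sumS (fun s => x (kap s) * IZR (fst s)) (triList (a,b,c)),
                 sumS (fun s => x (kap s) * IZR (snd s)) (triList (a,b,c))) = x (kap c)).
  { unfold sumS. cbn [fold_right triList]. clear -Hj Hsum. tri_cases Hj; unfold lam1, lam2, lam3; cbn [fst snd];
    repeat split; lra. }
  destruct L as [L1 [L2 L3]].
  split.
  - apply functional_extensionality. intro v.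
    destruct (classic (In v (triL kap (a,b,c)))) as [I|I].
    + unfold triL in I; simpl in I. destruct I as [<-|[<-|[<-|[]]]]; congruence.
    + rewrite V4 by auto. destruct (Req_dec (x v) 0); auto. exfalso; auto.
  - unfold inT. rewrite L1, L2, L3. auto.
Qed.

Definition baryS (j : slot*slot*slot) (p : R*R) (s : slot) : R :=
  let '(a,b,c) := j in
  if slotb s a then lam1 j p else if slotb s b then lam2 j p else if slotb s c then lam3 j p else 0.

Lemma slotb_spec s t : slotb s t = true <-> s = t.
Proof. destruct s, t; unfold slotb; simpl. rewrite andb_true_iff, !Z.eqb_eq. split; [intros [-> ->]|intro H; inversion H]; auto. Qed.

Lemma bary_kap K kap (HG : GoodK K kap) j p s : In j tris8 -> In s slots9 -> bary kap j p (kap s) = baryS j p s.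
Proof.
  intros Hj Hs. destruct j as [[a b] c]. destruct (bary_vals K kap HG a b c p Hj) as [V1 [V2 [V3 V4]]].
  unfold baryS.
  destruct (slotb s a) eqn:E1; [apply slotb_spec in E1; subst; auto|].
  destruct (slotb s b) eqn:E2; [apply slotb_spec in E2; subst; auto|].
  destruct (slotb s c) eqn:E3; [apply slotb_spec in E3; subst; auto|].
  apply V4. apply (kap_notin K kap HG); auto. simpl. intros [E|[E|[E|[]]]]; subst;
  [rewrite (proj2 (slotb_spec _ _) eq_refl) in E1 | rewrite (proj2 (slotb_spec _ _) eq_refl) in E2 |
   rewrite (proj2 (slotb_spec _ _) eq_refl) in E3]; discriminate.
Qed.

Lemma baryS_uniq j j' p s : In j tris8 -> In j' tris8 -> In s slots9 -> inT j p -> inT j' p ->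
  baryS j p s = baryS j' p s.
Proof.
  intros Hj Hj' Hs T T'. destruct p as [px py]. unfold inT in *.
  tri_cases Hj; tri_cases Hj'; unfold lam1, lam2, lam3 in *; cbn [fst snd] in *;
  tri_cases Hs; unfold baryS, lam1, lam2, lam3; cbn [fst snd slotb]; simpl; lra.
Qed.

Local Open Scope R_scope.

Lemma bary_uniq K kap (HG : GoodK K kap) j j' p : In j tris8 -> In j' tris8 -> inT j p -> inT j' p ->
  bary kap j p = bary kap j' p.
Proof.
  intros Hj Hj' T T'. apply functional_extensionality. intro v.
  destruct (classic (exists s, In s slots9 /\ v = kap s)) as [[s [Hs ->]]|N].
  - rewrite !(bary_kap K kap HG); auto. apply baryS_uniq; auto.
  - assert (Hn : forall j, In j tris8 -> ~ In v (triL kap j)).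
    { intros i Hi I. apply N. unfold triL in I. apply in_map_iff in I. destruct I as [s [Es Is]].
      exists s. split; auto. eapply tri_slots; eauto. }
    destruct j as [[a b] c], j' as [[a' b'] c'].
    destruct (bary_vals K kap HG a b c p Hj) as [_ [_ [_ V]]].
    destruct (bary_vals K kap HG a' b' c' p Hj') as [_ [_ [_ V']]].
    rewrite V, V'; auto.
Qed.

Definition Lf (L : R*R) (p : R*R) : R := fst L * fst p + snd L * snd p.
Definition forms4 : list (R*R) := [(1,0);(0,1);(1,-1);(1,1)].
Definition Good (Ls : list (R*R)) p q := forall L, In L Ls -> 0 <= Lf L p * Lf L q.

Lemma same_sign a b : 0 <= a * b -> (0 <= a /\ 0 <= b) \/ (a <= 0 /\ b <= 0).
Proof.
  intro H. destruct (Rle_or_lt 0 a); destruct (Rle_or_lt 0 b).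
  - left; auto.
  - destruct (Req_dec a 0). right; lra. exfalso. nra.
  - destruct (Req_dec b 0). right; lra. exfalso. nra.
  - right; lra.
Qed.

Lemma seg_tri p q : Qsq p -> Qsq q -> Good forms4 p q -> exists j, In j tris8 /\ inT j p /\ inT j q.
Proof.
  intros [Px Py] [Qx Qy] Hg. destruct p as [px py], q as [qx qy]. cbn [fst snd] in *.
  assert (P1 := Hg (1,0) ltac:(simpl; auto)). assert (P2 := Hg (0,1) ltac:(simpl; auto)).
  assert (P3 := Hg (1,-1) ltac:(simpl; auto)). assert (P4 := Hg (1,1) ltac:(simpl; auto)).
  unfold Lf in P1, P2, P3, P4; cbn [fst snd] in P1, P2, P3, P4.
  replace ((1 * px + 0 * py) * (1 * qx + 0 * qy)) with (px * qx) in P1 by ring.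
  replace ((0 * px + 1 * py) * (0 * qx + 1 * qy)) with (py * qy) in P2 by ring.
  replace ((1 * px + -1 * py) * (1 * qx + -1 * qy)) with ((px - py) * (qx - qy)) in P3 by ring.
  replace ((1 * px + 1 * py) * (1 * qx + 1 * qy)) with ((px + py) * (qx + qy)) in P4 by ring.
  apply same_sign in P1, P2, P3, P4.
  unfold inT, lam1, lam2, lam3.
  destruct P1 as [[A1 A2]|[A1 A2]]; destruct P2 as [[B1 B2]|[B1 B2]].
  - destruct P3 as [[C1 C2]|[C1 C2]].
    + exists ((0,0),(1,0),(1,1))%Z. split; [simpl; tauto|]. cbn [fst snd]. repeat split; lra.
    + exists ((0,0),(0,1),(1,1))%Z. split; [simpl; tauto|]. cbn [fst snd]. repeat split; lra.
  - destruct P4 as [[C1 C2]|[C1 C2]].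
    + exists ((0,0),(1,0),(1,-1))%Z. split; [simpl; tauto|]. cbn [fst snd]. repeat split; lra.
    + exists ((0,0),(0,-1),(1,-1))%Z. split; [simpl; tauto|]. cbn [fst snd]. repeat split; lra.
  - destruct P4 as [[C1 C2]|[C1 C2]].
    + exists ((0,0),(0,1),(-1,1))%Z. split; [simpl; tauto|]. cbn [fst snd]. repeat split; lra.
    + exists ((0,0),(-1,0),(-1,1))%Z. split; [simpl; tauto|]. cbn [fst snd]. repeat split; lra.
  - destruct P3 as [[C1 C2]|[C1 C2]].
    + exists ((0,0),(0,-1),(-1,-1))%Z. split; [simpl; tauto|]. cbn [fst snd]. repeat split; lra.
    + exists ((0,0),(-1,0),(-1,-1))%Z. split; [simpl; tauto|]. cbn [fst snd]. repeat split; lra.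
Qed.

Lemma cover p : Qsq p -> exists j, In j tris8 /\ inT j p.
Proof.
  intro H. destruct (seg_tri p p H H) as [j [Hj [T _]]]; eauto.
  intros L _. apply Rle_0_sqr.
Qed.

Definition inTb j p : bool :=
  if Rle_dec 0 (lam1 j p) then if Rle_dec 0 (lam2 j p) then if Rle_dec 0 (lam3 j p) then true else false
  else false else false.
Lemma inTb_spec j p : inTb j p = true <-> inT j p.
Proof. unfold inTb, inT. destruct (Rle_dec 0 (lam1 j p)); destruct (Rle_dec 0 (lam2 j p));
  destruct (Rle_dec 0 (lam3 j p)); split; intuition discriminate. Qed.

Definition Gk (kap : slot -> vertex) (p : R*R) : pt :=
  match find (fun j => inTb j p) tris8 with Some j => bary kap j p | None => fun _ => 0 end.

Lemma G_tri K kap (HG : GoodK K kap) j p : In j tris8 -> inT j p -> Gk kap p = bary kap j p.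
Proof.
  intros Hj T. unfold Gk. destruct (find (fun j => inTb j p) tris8) as [j'|] eqn:E.
  - apply find_some in E. destruct E as [Hj' T']. apply inTb_spec in T'.
    apply (bary_uniq K kap HG); auto.
  - exfalso. apply (find_none _ _ E) in Hj. rewrite (proj2 (inTb_spec j p) T) in Hj. discriminate.
Qed.

Lemma G_spec K kap (HG : GoodK K kap) p : Qsq p -> isPt K (Gk kap p) /\ Fk kap (Gk kap p) = p.
Proof.
  intro H. destruct (cover p H) as [j [Hj T]]. rewrite (G_tri K kap HG j p Hj T).
  split. apply (isPt_bary K kap HG); auto. apply (F_bary K kap HG); auto.
Qed.

Lemma isPt_tri K kap (HG : GoodK K kap) x : isPt K x -> exists j, In j tris8 /\
  (forall v, x v <> 0 -> In v (triL kap j)) /\ (forall v, 0 <= x v) /\ sumL (triL kap j) x = 1.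
Proof.
  intros [s [Ks [Nd [Sup [Nn Sum]]]]]. pose proof HG as [_ [_ [_ G3]]].
  destruct (G3 s Ks) as [j [Hj Hinc]]. exists j. split; auto. split; [intros; apply Hinc; auto|].
  split; auto. rewrite <- Sum. symmetry. apply sumL_incl; auto. apply (triL_NoDup K kap HG); auto.
Qed.

Lemma G_F K kap (HG : GoodK K kap) x : isPt K x -> Gk kap (Fk kap x) = x.
Proof.
  intro H. destruct (isPt_tri K kap HG x H) as [j [Hj [S [N Sum]]]].
  destruct (inv_tri K kap HG j x Hj S N Sum) as [E T].
  rewrite (G_tri K kap HG j); auto.
Qed.

Lemma FQ K kap (HG : GoodK K kap) x : isPt K x -> Qsq (Fk kap x).
Proof.
  intro H. destruct (isPt_tri K kap HG x H) as [j [Hj [S [N Sum]]]].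
  rewrite (F_tri K kap HG j x Hj S). destruct j as [[a b] c].
  unfold triL in Sum; simpl in Sum.
  pose proof (N (kap a)). pose proof (N (kap b)). pose proof (N (kap c)).
  unfold sumS, Qsq. cbn [fold_right triList].
  clear -Hj Sum H0 H1 H2. tri_cases Hj; cbn [fst snd]; repeat split; lra.
Qed.

Lemma Q_mid p q t : Qsq p -> Qsq q -> 0 <= t <= 1 -> Qsq (mid p q t).
Proof.
  intros [P1 P2] [Q1 Q2] T. unfold Qsq, mid; cbn [fst snd].
  destruct p as [px py], q as [qx qy]; cbn [fst snd] in *.
  repeat split; nra.
Qed.

Lemma strLen_cat K x ps m qs y d1 d2 : strLen K x ps m d1 -> strLen K m qs y d2 ->
  strLen K x (ps ++ m :: qs) y (d1 + d2).
Proof.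
  revert x d1. induction ps as [|p0 ps IH]; intros x d1 H1 H2; simpl in *.
  - exists d1, d2. auto.
  - destruct H1 as [e1 [e2 [P [S ->]]]]. exists e1, (e2 + d2). split; auto. split; auto. ring.
Qed.

Lemma strLen_lb K kap (HG : GoodK K kap) ps : forall x y d, strLen K x ps y d -> eucl (Fk kap x) (Fk kap y) <= d.
Proof.
  induction ps as [|p0 ps IH]; intros x y d H; simpl in H.
  - rewrite (Kpiece K kap HG x y d H). lra.
  - destruct H as [d1 [d2 [P [S ->]]]]. rewrite (Kpiece K kap HG _ _ _ P).
    pose proof (IH _ _ _ S). pose proof (eucl_tri (Fk kap x) (Fk kap p0) (Fk kap y)). lra.
Qed.

Definition Str K kap p q := exists ps, Forall (isPt K) ps /\ strLen K (Gk kap p) ps (Gk kap q) (eucl p q).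

Lemma Str_base K kap (HG : GoodK K kap) p q : Qsq p -> Qsq q -> Good forms4 p q -> Str K kap p q.
Proof.
  intros Hp Hq Hg. destruct (seg_tri p q Hp Hq Hg) as [j [Hj [Tp Tq]]].
  exists []. split; [constructor|]. simpl.
  rewrite (G_tri K kap HG j p Hj Tp), (G_tri K kap HG j q Hj Tq).
  pose proof HG as [_ [_ [G2 _]]].
  exists (triL kap j). split; auto. split; [apply (triL_NoDup K kap HG); auto|].
  split; [apply (bary_inS K kap HG); auto|]. split; [apply (bary_inS K kap HG); auto|].
  destruct j as [[a b] c].
  rewrite !(image_tri K kap HG a b c (triL kap (a,b,c))); auto;
    try (apply (triL_NoDup K kap HG); auto); try (intros v Hv; auto); try (eapply bary_supp; eauto).
  destruct (bary_vals K kap HG a b c p Hj) as [V1 [V2 [V3 _]]].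
  destruct (bary_vals K kap HG a b c q Hj) as [W1 [W2 [W3 _]]].
  rewrite V2, V3, W2, W3. apply eucl_eq_of_sq.
  clear -Hj. destruct p as [px py], q as [qx qy]. tri_cases Hj; unfold lam1, lam2, lam3; cbn [fst snd]; ring.
Qed.

Lemma div01 a b : 0 <= a -> a <= b -> 0 < b -> 0 <= a / b <= 1.
Proof.
  intros. split.
  - apply Rmult_le_pos; [lra| left; apply Rinv_0_lt_compat; lra].
  - apply (Rmult_le_reg_r b); [lra|]. unfold Rdiv. rewrite Rmult_assoc, Rinv_l; lra.
Qed.

Lemma Str_split K kap (HG : GoodK K kap) L M :
  (forall p q, Qsq p -> Qsq q -> Good (L :: M) p q -> Str K kap p q) ->
  forall p q, Qsq p -> Qsq q -> Good M p q -> Str K kap p q.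
Proof.
  intros H p q Hp Hq Hg.
  destruct (Rle_or_lt 0 (Lf L p * Lf L q)) as [Hl|Hl].
  - apply H; auto. intros L' [<-|HL']; auto.
  - set (t := Lf L p / (Lf L p - Lf L q)).
    assert (Hd : Lf L p - Lf L q <> 0) by (intro E; assert (Lf L p = Lf L q) by lra; nra).
    assert (Ht : 0 <= t <= 1).
    { unfold t. destruct (Rle_or_lt 0 (Lf L p)).
      - assert (Lf L q < 0) by nra. assert (Lf L p > 0) by nra.
        apply div01; lra.
      - assert (Lf L q > 0) by nra.
        replace (Lf L p / (Lf L p - Lf L q)) with ((- Lf L p) / (Lf L q - Lf L p)) by (field; lra).
        apply div01; lra. }
    set (m := mid p q t).
    assert (Hm : Qsq m) by (apply Q_mid; auto).
    assert (Lm : forall L', Lf L' m = (1 - t) * Lf L' p + t * Lf L' q) by (intro; unfold Lf, m, mid; cbn [fst snd]; ring).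
    assert (Lm0 : Lf L m = 0) by (rewrite Lm; unfold t; field; auto).
    assert (G1 : Good (L :: M) p m).
    { intros L' [<-|HL']. rewrite Lm0; lra. rewrite Lm. specialize (Hg L' HL').
      pose proof (Rle_0_sqr (Lf L' p)). unfold Rsqr in *. nra. }
    assert (G2 : Good (L :: M) m q).
    { intros L' [<-|HL']. rewrite Lm0; lra. rewrite Lm. specialize (Hg L' HL').
      pose proof (Rle_0_sqr (Lf L' q)). unfold Rsqr in *. nra. }
    destruct (H p m Hp Hm G1) as [ps1 [F1 S1]].
    destruct (H m q Hm Hq G2) as [ps2 [F2 S2]].
    exists (ps1 ++ Gk kap m :: ps2). split.
    + apply Forall_app. split; auto. constructor; auto. apply (G_spec K kap HG); auto.
    + replace (eucl p q) with (eucl p m + eucl m q).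
      * apply strLen_cat; auto.
      * unfold m. rewrite eucl_mid1, eucl_mid2 by lra. ring.
Qed.

Lemma Str_all K kap (HG : GoodK K kap) p q : Qsq p -> Qsq q -> Str K kap p q.
Proof.
  intros Hp Hq.
  apply (Str_split K kap HG (1,0) []); auto; [|intros L []].
  apply (Str_split K kap HG (0,1) [(1,0)]); auto.
  apply (Str_split K kap HG (1,-1) [(0,1);(1,0)]); auto.
  apply (Str_split K kap HG (1,1) [(1,-1);(0,1);(1,0)]); auto.
  intros p' q' Hp' Hq' Hg. apply (Str_base K kap HG); auto.
  intros L HL. apply Hg. simpl in HL |- *. tauto.
Qed.

Lemma dist_eq K kap (HG : GoodK K kap) x y : isPt K x -> isPt K y ->
  Defs.dist K x y = Finite (eucl (Fk kap x) (Fk kap y)).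
Proof.
  intros Hx Hy. unfold Defs.dist. apply is_glb_Rbar_unique. split.
  - intros d [ps [_ H]]. simpl. apply (strLen_lb K kap HG ps x y d H).
  - intros b Hb. apply Hb.
    destruct (Str_all K kap HG (Fk kap x) (Fk kap y)) as [ps [F S]]; try (apply (FQ K kap HG); auto).
    rewrite !(G_F K kap HG) in S by auto. exists ps. auto.
Qed.

Local Open Scope R_scope.

Lemma geo_pts K kap (HG : GoodK K kap) g a b l : geodesic K g a b l ->
  isPt K a /\ isPt K b /\ eucl (Fk kap a) (Fk kap b) = l /\
  forall s, 0 <= s <= l -> isPt K (g s) /\ Fk kap (g s) = cmp (Fk kap a) (Fk kap b) l s.
Proof.
  intros [Hl [G0 [Gl H]]].
  assert (Ha : isPt K a) by (rewrite <- G0; apply (H 0 0); lra).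
  assert (Hb : isPt K b) by (rewrite <- Gl; apply (H l l); lra).
  assert (Hd : forall s t, 0 <= s <= l -> 0 <= t <= l -> eucl (Fk kap (g s)) (Fk kap (g t)) = Rabs (s - t)).
  { intros s t Hs Ht. destruct (H s t Hs Ht) as [Ps D]. destruct (H t t Ht Ht) as [Pt _].
    rewrite (dist_eq K kap HG) in D by auto. injection D; auto. }
  assert (Eab : eucl (Fk kap a) (Fk kap b) = l).
  { rewrite <- G0, <- Gl, Hd by lra. rewrite Rabs_left1 by lra. ring. }
  split; auto. split; auto. split; auto.
  intros s Hs. split; [apply (H s s Hs Hs)|].
  apply eq_case; auto.
  - rewrite <- G0, Hd by lra. rewrite Rabs_left1 by lra. ring.
  - rewrite <- Gl, Hd by lra. rewrite Rabs_left1 by lra. ring.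
Qed.

Definition nth3 (k : nat) (P : (R*R)*(R*R)*(R*R)) : R*R :=
  let '(A,B,C) := P in match k with 0%nat => A | 1%nat => B | _ => C end.
Definition nxt (k : nat) : nat := match k with 0%nat => 1%nat | 1%nat => 2%nat | _ => 0%nat end.
Definition cv (k : nat) (t : R) : R*R*R :=
  match k with 0%nat => (1 - t, t, 0) | 1%nat => (0, 1 - t, t) | _ => (t, 0, 1 - t) end.

Lemma side_coords k t A B C : let '(c1,c2,c3) := cv k t in c1 + c2 + c3 = 1 /\
  fst (mid (nth3 k (A,B,C)) (nth3 (nxt k) (A,B,C)) t) = c1 * fst A + c2 * fst B + c3 * fst C /\
  snd (mid (nth3 k (A,B,C)) (nth3 (nxt k) (A,B,C)) t) = c1 * snd A + c2 * snd B + c3 * snd C.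
Proof. destruct k as [|[|k]]; unfold mid; simpl; repeat split; ring. Qed.

Lemma quad_id' (d1 d2 : R) (P1 P2 P3 : R * R) :
  (d1 * fst P1 + d2 * fst P2 + (- d1 - d2) * fst P3)^2 + (d1 * snd P1 + d2 * snd P2 + (- d1 - d2) * snd P3)^2 =
  - (d1 * d2 * (eucl P1 P2)^2 + d1 * (- d1 - d2) * (eucl P1 P3)^2 + d2 * (- d1 - d2) * (eucl P2 P3)^2).
Proof. apply quad_id. Qed.

Lemma cmp_congr X Y Z xb yb zb : eucl X Y = eucl xb yb -> eucl Y Z = eucl yb zb -> eucl Z X = eucl zb xb ->
  forall k1 k2 m1 s m2 t,
  eucl (cmp (nth3 k1 (X,Y,Z)) (nth3 (nxt k1) (X,Y,Z)) m1 s) (cmp (nth3 k2 (X,Y,Z)) (nth3 (nxt k2) (X,Y,Z)) m2 t) =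
  eucl (cmp (nth3 k1 (xb,yb,zb)) (nth3 (nxt k1) (xb,yb,zb)) m1 s) (cmp (nth3 k2 (xb,yb,zb)) (nth3 (nxt k2) (xb,yb,zb)) m2 t).
Proof.
  intros E1 E2 E3 k1 k2 m1 s m2 t. rewrite !cmp_mid.
  pose proof (side_coords k1 (s/m1) X Y Z) as S1. pose proof (side_coords k1 (s/m1) xb yb zb) as S1'.
  pose proof (side_coords k2 (t/m2) X Y Z) as S2. pose proof (side_coords k2 (t/m2) xb yb zb) as S2'.
  destruct (cv k1 (s/m1)) as [[c1 c2] c3]. destruct (cv k2 (t/m2)) as [[e1 e2] e3].
  destruct S1 as [Sc [A1 A2]]. destruct S1' as [_ [B1 B2]]. destruct S2 as [Se [C1 C2]]. destruct S2' as [_ [D1 D2]].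
  unfold eucl at 1 2. rewrite A1, A2, B1, B2, C1, C2, D1, D2.
  assert (H3 : c3 = 1 - c1 - c2) by lra. assert (H4 : e3 = 1 - e1 - e2) by lra. subst c3 e3.
  set (d1 := c1 - e1). set (d2 := c2 - e2).
  assert (EP : forall P1 P2 P3 : R*R,
     (c1 * fst P1 + c2 * fst P2 + (1 - c1 - c2) * fst P3 - (e1 * fst P1 + e2 * fst P2 + (1 - e1 - e2) * fst P3)) ^ 2 +
     (c1 * snd P1 + c2 * snd P2 + (1 - c1 - c2) * snd P3 - (e1 * snd P1 + e2 * snd P2 + (1 - e1 - e2) * snd P3)) ^ 2 =
     - (d1 * d2 * (eucl P1 P2)^2 + d1 * (- d1 - d2) * (eucl P1 P3)^2 + d2 * (- d1 - d2) * (eucl P2 P3)^2)).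
  { intros. rewrite <- quad_id'. unfold d1, d2. ring. }
  rewrite !EP. rewrite E1, E2. rewrite (eucl_sym X Z), E3, (eucl_sym zb xb). reflexivity.
Qed.

Theorem partG K kap : GoodK K kap -> CAT0 K.
Proof.
  intro HG. split.
  - intros x y Hx Hy.
    set (X := Fk kap x). set (Y := Fk kap y). set (l := eucl X Y).
    assert (QX : Qsq X) by (apply (FQ K kap HG); auto).
    assert (QY : Qsq Y) by (apply (FQ K kap HG); auto).
    assert (Tau : forall s, 0 <= s <= l -> 0 <= s / l <= 1).
    { intros s Hs. destruct (Req_dec l 0) as [E|E].
      - rewrite E. unfold Rdiv. rewrite Rinv_0. lra.
      - apply div01; lra. }
    exists (fun t => Gk kap (mid X Y (t / l))), l.
    split; [apply eucl_ge0|]. split; [|split].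
    + cbv beta. unfold Rdiv. rewrite Rmult_0_l, mid_0. apply (G_F K kap HG); auto.
    + cbv beta. destruct (Req_dec l 0) as [E|E].
      * rewrite E. unfold Rdiv. rewrite Rmult_0_l, mid_0.
        assert (XY : X = Y) by (apply eucl_zero; exact E). rewrite XY. apply (G_F K kap HG); auto.
      * unfold Rdiv. rewrite Rinv_r by auto. rewrite mid_1. apply (G_F K kap HG); auto.
    + intros s t Hs Ht.
      destruct (G_spec K kap HG (mid X Y (s / l))) as [Ps Fs]. apply Q_mid; auto.
      destruct (G_spec K kap HG (mid X Y (t / l))) as [Pt Ft]. apply Q_mid; auto.
      split; auto. rewrite (dist_eq K kap HG) by auto. rewrite Fs, Ft. f_equal.
      rewrite eucl_mid12. fold l. destruct (Req_dec l 0) as [E|E].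
      * assert (s = 0) by lra. assert (t = 0) by lra. subst s t. rewrite E. rewrite Rminus_0_r, Rabs_R0. ring.
      * replace (Rabs (s / l - t / l) * l) with (Rabs ((s/l - t/l) * l))
          by (rewrite Rabs_mult, (Rabs_pos_eq l) by (apply eucl_ge0); reflexivity).
        f_equal. field. auto.
  - intros x y z g1 g2 g3 l1 l2 l3 xb yb zb H1 H2 H3 E1 E2 E3 sides e1 e2 s t I1 I2.
    destruct (geo_pts K kap HG _ _ _ _ H1) as [Px [Py [L1 F1]]].
    destruct (geo_pts K kap HG _ _ _ _ H2) as [_ [Pz [L2 F2]]].
    destruct (geo_pts K kap HG _ _ _ _ H3) as [_ [_ [L3 F3]]].
    set (X := Fk kap x) in *. set (Y := Fk kap y) in *. set (Z := Fk kap z) in *.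
    assert (EXY : eucl X Y = eucl xb yb) by congruence.
    assert (EYZ : eucl Y Z = eucl yb zb) by congruence.
    assert (EZX : eucl Z X = eucl zb xb) by congruence.
    pose proof (cmp_congr X Y Z xb yb zb EXY EYZ EZX) as C. cbn [nth3 nxt] in C.
    unfold sides in I1, I2. simpl in I1, I2.
    destruct I1 as [<-|[<-|[<-|[]]]]; destruct I2 as [<-|[<-|[<-|[]]]]; intros Hs Ht;
    [ destruct (F1 s Hs) as [Ps Fs]; destruct (F1 t Ht) as [Pt Ft]
    | destruct (F1 s Hs) as [Ps Fs]; destruct (F2 t Ht) as [Pt Ft]
    | destruct (F1 s Hs) as [Ps Fs]; destruct (F3 t Ht) as [Pt Ft]
    | destruct (F2 s Hs) as [Ps Fs]; destruct (F1 t Ht) as [Pt Ft]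
    | destruct (F2 s Hs) as [Ps Fs]; destruct (F2 t Ht) as [Pt Ft]
    | destruct (F2 s Hs) as [Ps Fs]; destruct (F3 t Ht) as [Pt Ft]
    | destruct (F3 s Hs) as [Ps Fs]; destruct (F1 t Ht) as [Pt Ft]
    | destruct (F3 s Hs) as [Ps Fs]; destruct (F2 t Ht) as [Pt Ft]
    | destruct (F3 s Hs) as [Ps Fs]; destruct (F3 t Ht) as [Pt Ft] ];
    rewrite (dist_eq K kap HG) by auto; rewrite Fs, Ft;
    first [ rewrite (C 0%nat 0%nat) | rewrite (C 0%nat 1%nat) | rewrite (C 0%nat 2%nat)
          | rewrite (C 1%nat 0%nat) | rewrite (C 1%nat 1%nat) | rewrite (C 1%nat 2%nat)
          | rewrite (C 2%nat 0%nat) | rewrite (C 2%nat 1%nat) | rewrite (C 2%nat 2%nat) ];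
    simpl; lra.
Qed.


Theorem mainTheorem13 :
  forall (r : word) (v0 : vertex) (K : list vertex -> Prop),
    reflS3 r -> isVertex relsW v0 -> ~ fixedV r v0 ->
    isLift K (Ucomp r v0) ->
    CAT0 K.
Proof.
  intros r v0 K H1 H2 H3 H4.
  destruct (partC r v0 K H1 H2 H3 H4) as [kap HG].
  exact (partG K kap HG).
Qed.
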